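(* Let $(a_n)_{\mathrm c}=[a_{n\varepsilon}]_{\mathrm c}=[\hat a_{n\varepsilon}]_{\mathrm c}\in\widetilde{\mathbb C}_{\mathrm c}$, $z=[z_\varepsilon]=[\hat z_\varepsilon]\in\widetilde{\mathbb C}$ and $c=[c_\varepsilon]=[\hat c_\varepsilon]\in\widetilde{\mathbb C}$, and assume $z\in S((a_n)_{\mathrm c},c)$. Then: (i) the representatives $(a_{n\varepsilon})_{n,\varepsilon}$, $(z_\varepsilon)$, $(c_\varepsilon)$ (and likewise any other choice of representatives) satisfy all the conditions (a), (b), (c) in the definition of the set of convergence; (ii) $[a_{n\varepsilon}(z_\varepsilon-c_\varepsilon)^n]_{\mathrm s}=[\hat a_{n\varepsilon}(\hat z_\varepsilon-\hat c_\varepsilon)^n]_{\mathrm s}$ in $\widetilde{\mathbb C}_{\mathrm s}$.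
   Context: Fix $I=(0,1]$ and a gauge $\rho=(\rho_\varepsilon)_{\varepsilon\in I}$ with $\rho_\varepsilon\in I$ and $\rho_\varepsilon\to0$ as $\varepsilon\to0$. ''$\forall^0\varepsilon$'' means ''for all sufficiently small $\varepsilon\in I$''. A net $(x_\varepsilon)\in\mathbb C^I$ is $\rho$-moderate ($(x_\varepsilon)\in\mathbb C_\rho$) if $\exists N\in\mathbb N\,\forall^0\varepsilon:|x_\varepsilon|\le\rho_\varepsilon^{-N}$, and $\rho$-negligible if $\forall q\in\mathbb N\,\forall^0\varepsilon:|x_\varepsilon|\le\rho_\varepsilon^q$. $\widetilde{\mathbb C}:=\mathbb C_\rho/\{\text{negligible nets}\}$ with classes $[x_\varepsilon]$; $\widetilde{\mathbb R}\subseteq\widetilde{\mathbb C}$ consists of classes of real moderate nets; $\mathrm d\rho:=[\rho_\varepsilon]$, $|[z_\varepsilon]|:=[|z_\varepsilon|]$. On $\widetilde{\mathbb R}$: $[x_\varepsilon]\le[y_\varepsilon]$ iff $x_\varepsilon\le y_\varepsilon+z_\varepsilon$ $\forall^0\varepsilon$ for some negligible $(z_\varepsilon)$; $x<y$ iff $\exists m\,\forall^0\varepsilon:y_\varepsilon-x_\varepsilon>\rho_\varepsilon^m$. Hypernatural numbers: $\widetilde{\mathbb N}:=\{[n_\varepsilon]\in\widetilde{\mathbb R}:n_\varepsilon\in\mathbb N\ \forall\varepsilon\}$; for each $N\in\widetilde{\mathbb N}$ a representative $(\mathrm{ni}(N)_\varepsilon)$ with all $\mathrm{ni}(N)_\varepsilon\in\mathbb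 N$ is fixed. Hyperlimit: $l=\lim_{n\in\widetilde{\mathbb N}}a_n$ means $\forall q\,\exists M\in\widetilde{\mathbb N}\,\forall n\in\widetilde{\mathbb N}:n\ge M\Rightarrow|a_n-l|<\mathrm d\rho^q$. Hyperseries: a net $(a_{n\varepsilon})_{n\in\mathbb N,\varepsilon\in I}$ is moderate over hypersums if for every $N\in\widetilde{\mathbb N}$ the net $(\sum_{n=0}^{\mathrm{ni}(N)_\varepsilon}a_{n\varepsilon})_\varepsilon$ is $\rho$-moderate; two such nets are equivalent if for all $N,M\in\widetilde{\mathbb N}$ the net $(\sum_{n=\mathrm{ni}(N)_\varepsilon}^{\mathrm{ni}(M)_\varepsilon}(a_{n\varepsilon}-\bar a_{n\varepsilon}))_\varepsilon$ is negligible; the quotient is $\widetilde{\mathbb C}_{\mathrm s}$ with classes $[a_{n\varepsilon}]_{\mathrm s}$. $\sum_{n=N}^Ma_n:=[\sum_{n=\mathrm{ni}(N)_\varepsilon}^{\mathrm{ni}(M)_\varepsilon}a_{n\varepsilon}]$, and $\sum_{n\in\widetilde{\mathbb N}}a_n:=\lim_{N\in\widetilde{\mathbb N}}\sum_{n=0}^Na_n$ when this hyperlimit exists (convergence). Coefficients: $\widetilde{\mathbb C}_{\mathrm c}$ is the set of weakly $\rho$-moderate nets $(a_{n\varepsilon})$ ($\exists Q,R\in\mathbb N\,\forall^0\varepsilon\,\forall n\in\mathbb N:|a_{n\varepsilon}|\le\rho_\varepsilon^{-nQ-R}$) modulo strong equivalence ($\forall q,r\,\forall^0\varepsilon\,\forall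 n:|a_{n\varepsilon}-\bar a_{n\varepsilon}|\le\rho_\varepsilon^{nq+r}$), classes $(a_n)_{\mathrm c}=[a_{n\varepsilon}]_{\mathrm c}$. $\widetilde{\mathbb R}_\infty:=(\mathbb R\cup\{\pm\infty\})^I/\sim_\rho$ (same negligibility relation), ordered by $x\le y$ iff some representatives satisfy $x_\varepsilon\le y_\varepsilon$ $\forall^0\varepsilon$, and for $x\in\widetilde{\mathbb R}$, $x<y$ iff $\exists m\,\forall^0\varepsilon:y_\varepsilon>x_\varepsilon+\rho_\varepsilon^m$. Radius: $\mathrm{rad}(a_n)_{\mathrm c}:=[(\limsup_n|a_{n\varepsilon}|^{1/n})^{-1}]\in\widetilde{\mathbb R}_\infty$. Set of convergence: $S((a_n)_{\mathrm c},c)$ is the set of $z\in\widetilde{\mathbb C}$ with $|z-c|<\mathrm{rad}(a_n)_{\mathrm c}$ for which there exist representatives $z=[z_\varepsilon]$, $c=[c_\varepsilon]$, $(a_n)_{\mathrm c}=[a_{n\varepsilon}]_{\mathrm c}$ such that: (a) the net $(a_{n\varepsilon}(z_\varepsilon-c_\varepsilon)^n)_{n,\varepsilon}$ is moderate over hypersums (its class $(a_n(z-c)^n)_n\in\widetilde{\mathbb C}_{\mathrm s}$ is called a formal hyperpower series); (b) the hyperseries $\sum_{n\in\widetilde{\mathbb N}}a_n(z-c)^n$ converges and equals $[\sum_{n=0}^{\infty}a_{n\varepsilon}(z_\varepsilon-c_\varepsilon)^n]$ (these ordinary series converging for small $\varepsilon$ to a moderate net); (c) for every representative $z=[\hat z_\varepsilon]$,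 the net $(\sum_{n\ge1}na_{n\varepsilon}(\hat z_\varepsilon-c_\varepsilon)^{n-1})_\varepsilon$ is $\rho$-moderate. *)

(* Defs.v *)
From Stdlib Require Import Reals.
From Coquelicot Require Import Coquelicot.
Open Scope R_scope.

(* Nets are total functions R -> _, only their values on I = (0,1] matter. *)

(* "forall^0 eps : P eps" : for all sufficiently small eps in I = (0,1] *)
Definition ev0 (P : R -> Prop) : Prop :=
  exists e0 : R, 0 < e0 <= 1 /\ forall e : R, 0 < e < e0 -> P e.

Definition is_gauge (rho : R -> R) : Prop :=
  (forall e, 0 < e <= 1 -> 0 < rho e <= 1) /\
  (forall d, 0 < d -> ev0 (fun e => rho e < d)).

Definition moderateR (rho : R -> R) (x : R -> R) : Prop :=
  exists N : nat, ev0 (fun e => Rabs (x e) <= / (rho e ^ N)).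
Definition negligibleR (rho : R -> R) (x : R -> R) : Prop :=
  forall q : nat, ev0 (fun e => Rabs (x e) <= rho e ^ q).
Definition moderateC (rho : R -> R) (x : R -> C) : Prop :=
  moderateR rho (fun e => Cmod (x e)).
Definition negligibleC (rho : R -> R) (x : R -> C) : Prop :=
  negligibleR rho (fun e => Cmod (x e)).
Definition eqC (rho : R -> R) (x y : R -> C) : Prop :=
  negligibleC rho (fun e => (x e - y e)%C).

Definition leR (rho : R -> R) (x y : R -> R) : Prop :=
  exists z : R -> R, negligibleR rho z /\ ev0 (fun e => x e <= y e + z e).
Definition ltR (rho : R -> R) (x y : R -> R) : Prop :=
  exists m : nat, ev0 (fun e => y e - x e > rho e ^ m).

Definition hypnat (rho : R -> R) (n : R -> nat) : Prop :=
  moderateR rho (fun e => INR (n e)).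

Definition hsum (a : nat -> R -> C) (N M : R -> nat) : R -> C :=
  fun e => sum_n_m (fun n => a n e) (N e) (M e).

Definition mod_hsums (rho : R -> R) (a : nat -> R -> C) : Prop :=
  forall N, hypnat rho N -> moderateC rho (hsum a (fun _ => 0%nat) N).

(* equivalence defining the quotient C~_s *)
Definition eq_s (rho : R -> R) (a b : nat -> R -> C) : Prop :=
  forall N M, hypnat rho N -> hypnat rho M ->
    negligibleC rho (hsum (fun n e => (a n e - b n e)%C) N M).

Definition hyperlim (rho : R -> R) (s : (R -> nat) -> R -> C) (l : R -> C) : Prop :=
  forall q : nat, exists M, hypnat rho M /\
    forall n, hypnat rho n ->
      leR rho (fun e => INR (M e)) (fun e => INR (n e)) ->
      ltR rho (fun e => Cmod (s n e - l e)%C) (fun e => rho e ^ q).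

Definition hyperseries_to (rho : R -> R) (a : nat -> R -> C) (l : R -> C) : Prop :=
  hyperlim rho (fun N => hsum a (fun _ => 0%nat) N) l.

Definition series_to (f : nat -> C) (l : C) : Prop :=
  forall eps : R, 0 < eps -> exists N : nat, forall n : nat, (N <= n)%nat ->
    Cmod (sum_n_m f 0 n - l)%C < eps.

Definition weakly_moderate (rho : R -> R) (a : nat -> R -> C) : Prop :=
  exists Q R0 : nat, ev0 (fun e => forall n : nat,
    Cmod (a n e) <= / (rho e ^ (n * Q + R0))).
Definition strong_eq (rho : R -> R) (a b : nat -> R -> C) : Prop :=
  forall q r : nat, ev0 (fun e => forall n : nat,
    Cmod (a n e - b n e)%C <= rho e ^ (n * q + r)).

(* nonnegative n-th root x^(1/n) of x >= 0 (with 0^(1/n) = 0) *)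
Definition nroot (n : nat) (x : R) : R :=
  match Rle_dec x 0 with left _ => 0 | right _ => Rpower x (/ INR n) end.

(* inversion on [0, +oo], with 1/0 = +oo and 1/(+oo) = 0 *)
Definition rbar_inv (x : Rbar) : Rbar :=
  match x with
  | Finite r => if Req_EM_T r 0 then p_infty else Finite (/ r)
  | _ => Finite 0
  end.

(* representative of rad (a_n)_c : eps |-> (limsup_n |a_{n eps}|^(1/n))^(-1) *)
Definition rad_net (a : nat -> R -> C) : R -> Rbar :=
  fun e => rbar_inv (LimSup_seq (fun n => nroot n (Cmod (a n e)))).

Definition ltRinf (rho : R -> R) (x : R -> R) (y : R -> Rbar) : Prop :=
  exists m : nat, ev0 (fun e => Rbar_lt (Finite (x e + rho e ^ m)) (y e)).

Definition pterms (a : nat -> R -> C) (z c : R -> C) : nat -> R -> C :=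
  fun n e => (a n e * Cpow (z e - c e) n)%C.

Definition condA (rho : R -> R) (a : nat -> R -> C) (z c : R -> C) : Prop :=
  mod_hsums rho (pterms a z c).
Definition condB (rho : R -> R) (a : nat -> R -> C) (z c : R -> C) : Prop :=
  exists l : R -> C, moderateC rho l /\
    ev0 (fun e => series_to (fun n => pterms a z c n e) (l e)) /\
    hyperseries_to rho (pterms a z c) l.
Definition condC (rho : R -> R) (a : nat -> R -> C) (z c : R -> C) : Prop :=
  forall zh : R -> C, eqC rho zh z ->
    exists d : R -> C, moderateC rho d /\
      ev0 (fun e => series_to
        (fun n => (RtoC (INR n) * a n e * Cpow (zh e - c e) (n - 1))%C) (d e)).

Definition in_S (rho : R -> R) (a : nat -> R -> C) (z c : R -> C) : Prop :=
  (exists a' z' c', strong_eq rho a a' /\ eqC rho z z' /\ eqC rho c c' /\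
     ltRinf rho (fun e => Cmod (z' e - c' e)%C) (rad_net a')) /\
  (exists a' z' c', strong_eq rho a a' /\ eqC rho z z' /\ eqC rho c c' /\
     condA rho a' z' c' /\ condB rho a' z' c' /\ condC rho a' z' c').

(* Main.v *)
Require Import Defs.
From Stdlib Require Import Reals Lra Lia ClassicalEpsilon.
From Coquelicot Require Import Coquelicot.
Open Scope R_scope.

Lemma ev0_and (P Q : R -> Prop) : ev0 P -> ev0 Q -> ev0 (fun e => P e /\ Q e).
Proof.
  intros [e1 [H1 P1]] [e2 [H2 Q1]]. exists (Rmin e1 e2). split.
  - split; [apply Rmin_glb_lt; lra|]. apply Rle_trans with e1; [apply Rmin_l|lra].
  - intros e He. split; [apply P1|apply Q1]; split; try lra;
    apply Rlt_le_trans with (Rmin e1 e2); try lra; [apply Rmin_l|apply Rmin_r].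
Qed.

Lemma ev0_mono (P Q : R -> Prop) : ev0 P -> (forall e, 0 < e < 1 -> P e -> Q e) -> ev0 Q.
Proof.
  intros [e1 [H1 P1]] HPQ. exists e1. split; auto. intros e He. apply HPQ; [lra|]. apply P1; auto.
Qed.

Lemma ev0_true (P : R -> Prop) : (forall e, 0 < e < 1 -> P e) -> ev0 P.
Proof. intros H. exists 1. split; [lra|]. intros; apply H; lra. Qed.

Lemma gauge_small rho : is_gauge rho -> ev0 (fun e => 0 < rho e <= /4).
Proof.
  intros [H1 H2]. apply ev0_mono with (fun e => rho e < /4 /\ 0 < rho e <= 1).
  - apply ev0_and; [apply H2; lra|]. apply ev0_true. intros e He; apply H1; lra.
  - intros e _ [A B]; lra.
Qed.

Lemma pow_pos' x n : 0 < x -> 0 < x ^ n.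
Proof. intros; apply pow_lt; auto. Qed.

Lemma pow_le1 x n : 0 <= x <= 1 -> x ^ n <= 1.
Proof. intros H. induction n; simpl; [lra|]. assert (0 <= x ^ n) by (apply pow_le; lra). nra. Qed.

Lemma pow_decr x m n : 0 < x <= 1 -> (m <= n)%nat -> x ^ n <= x ^ m.
Proof.
  intros Hx Hmn. replace n with (m + (n - m))%nat by lia. rewrite pow_add.
  rewrite <- (Rmult_1_r (x ^ m)) at 2. apply Rmult_le_compat_l.
  - apply pow_le; lra.
  - apply pow_le1; lra.
Qed.

Lemma inv_pow_ge1 x n : 0 < x <= 1 -> 1 <= / x ^ n.
Proof.
  intros Hx. rewrite <- Rinv_1. apply Rinv_le_contravar. apply pow_pos'; lra. apply pow_le1; lra.
Qed.

Lemma pow_mult_inv x m n : 0 < x -> x ^ (m + n) * / x ^ m = x ^ n.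
Proof. intros Hx. rewrite pow_add. field. apply pow_nonzero; lra. Qed.

Definition SS (f : nat -> C) (N : nat) : C := sum_n_m f 0 N.
Definition RS (f : nat -> R) (N : nat) : R := sum_n_m f 0 N.

Lemma SS_0 (f : nat -> C) : SS f 0 = f 0%nat.
Proof. apply sum_n_n. Qed.
Lemma SS_S (f : nat -> C) N : SS f (S N) = (SS f N + f (S N))%C.
Proof. exact (sum_n_Sm f 0 N ltac:(lia)). Qed.
Lemma RS_0 (f : nat -> R) : RS f 0 = f 0%nat.
Proof. apply sum_n_n. Qed.
Lemma RS_S (f : nat -> R) N : RS f (S N) = RS f N + f (S N).
Proof. exact (sum_n_Sm f 0 N ltac:(lia)). Qed.

Lemma SS_plus (f g : nat -> C) N : SS (fun n => f n + g n)%C N = (SS f N + SS g N)%C.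
Proof. induction N; [rewrite !SS_0; auto|rewrite !SS_S, IHN; ring]. Qed.
Lemma SS_minus (f g : nat -> C) N : SS (fun n => f n - g n)%C N = (SS f N - SS g N)%C.
Proof. induction N; [rewrite !SS_0; auto|rewrite !SS_S, IHN; ring]. Qed.
Lemma SS_scal (k : C) (f : nat -> C) N : SS (fun n => k * f n)%C N = (k * SS f N)%C.
Proof. induction N; [rewrite !SS_0; auto|rewrite !SS_S, IHN; ring]. Qed.
Lemma SS_ext (f g : nat -> C) N : (forall n, (n <= N)%nat -> f n = g n) -> SS f N = SS g N.
Proof. intros H; induction N; [rewrite !SS_0; auto|rewrite !SS_S, IHN, H; auto]. Qed.
Lemma RS_ext (f g : nat -> R) N : (forall n, (n <= N)%nat -> f n = g n) -> RS f N = RS g N.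
Proof. intros H; induction N; [rewrite !RS_0; auto|rewrite !RS_S, IHN, H; auto]. Qed.

Lemma SS_bound (f : nat -> C) (b : nat -> R) N :
  (forall n, (n <= N)%nat -> Cmod (f n) <= b n) -> Cmod (SS f N) <= RS b N.
Proof.
  intros H; induction N.
  - rewrite SS_0, RS_0; auto.
  - rewrite SS_S, RS_S. eapply Rle_trans; [apply Cmod_triangle|].
    apply Rplus_le_compat; auto.
Qed.

Lemma RS_le (f g : nat -> R) N : (forall n, (n <= N)%nat -> f n <= g n) -> RS f N <= RS g N.
Proof.
  intros H; induction N; [rewrite !RS_0; auto|rewrite !RS_S; apply Rplus_le_compat; auto].
Qed.

Lemma RS_scal (k : R) (f : nat -> R) N : RS (fun n => k * f n) N = k * RS f N.
Proof. induction N; [rewrite !RS_0; auto|rewrite !RS_S, IHN; ring]. Qed.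

Lemma RS_nonneg (f : nat -> R) N : (forall n, 0 <= f n) -> 0 <= RS f N.
Proof. intros H; induction N; [rewrite RS_0; auto|rewrite RS_S; specialize (H (S N)); lra]. Qed.

Lemma RS_geom N : RS (fun n => (/2) ^ n) N = 2 - (/2) ^ N.
Proof. induction N; [rewrite RS_0; simpl; lra| rewrite RS_S, IHN; simpl; lra]. Qed.

Lemma RS_geom_le (k : R) N : 0 <= k -> RS (fun n => k * (/2) ^ n) N <= 2 * k.
Proof.
  intros Hk. rewrite RS_scal, RS_geom. assert (0 < (/2)^N) by (apply pow_pos'; lra). nra.
Qed.

Lemma RS_const_le (k : R) N : RS (fun _ => k) N = INR (S N) * k.
Proof. induction N; [rewrite RS_0; simpl; lra| rewrite RS_S, IHN; rewrite !S_INR; ring]. Qed.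

Lemma series_to_SS f l : series_to f l <-> (forall eps, 0 < eps -> exists N, forall n, (N <= n)%nat -> Cmod (SS f n - l) < eps).
Proof. reflexivity. Qed.

Lemma series_to_unique f l1 l2 : series_to f l1 -> series_to f l2 -> l1 = l2.
Proof.
  intros H1 H2. rewrite series_to_SS in H1, H2.
  cut ((l1 - l2)%C = 0%C). { intros H. replace l1 with ((l1 - l2) + l2)%C by ring. rewrite H. ring. }
  apply Cmod_eq_0. apply Rle_antisym; [|apply Cmod_ge_0].
  apply Rnot_lt_le. intros Hp.
  destruct (H1 (Cmod (l1 - l2) / 2)) as [N1 HN1]; [lra|].
  destruct (H2 (Cmod (l1 - l2) / 2)) as [N2 HN2]; [lra|].
  specialize (HN1 (max N1 N2) ltac:(lia)). specialize (HN2 (max N1 N2) ltac:(lia)).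
  set (s := SS f (max N1 N2)) in *.
  assert (Cmod (l1 - l2) <= Cmod (s - l2) + Cmod (s - l1)).
  { replace (l1 - l2)%C with ((s - l2) + - (s - l1))%C by ring.
    eapply Rle_trans; [apply Cmod_triangle|]. rewrite Cmod_opp; lra. }
  lra.
Qed.

Lemma series_to_plus f g A B : series_to f A -> series_to g B ->
  series_to (fun n => f n + g n)%C (A + B)%C.
Proof.
  intros H1 H2. rewrite series_to_SS in *. intros eps He. destruct (H1 (eps/2)) as [N1 HN1]; [lra|].
  destruct (H2 (eps/2)) as [N2 HN2]; [lra|]. exists (max N1 N2). intros n Hn.
  rewrite SS_plus. replace (SS f n + SS g n - (A + B))%C with ((SS f n - A) + (SS g n - B))%C by ring.
  eapply Rle_lt_trans; [apply Cmod_triangle|].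
  specialize (HN1 n ltac:(lia)); specialize (HN2 n ltac:(lia)); lra.
Qed.

Lemma series_to_scal f k A : series_to f A -> series_to (fun n => k * f n)%C (k * A)%C.
Proof.
  intros H. rewrite series_to_SS in *. intros eps He. destruct (H (eps / (Cmod k + 1))) as [N HN].
  { apply Rdiv_lt_0_compat; [lra|]. pose proof (Cmod_ge_0 k); lra. }
  exists N. intros n Hn. rewrite SS_scal.
  replace (k * SS f n - k * A)%C with (k * (SS f n - A))%C by ring.
  rewrite Cmod_mult. specialize (HN n Hn). pose proof (Cmod_ge_0 k).
  pose proof (Cmod_ge_0 (SS f n - A)).
  apply Rle_lt_trans with ((Cmod k + 1) * Cmod (SS f n - A)); [nra|].
  apply Rmult_lt_compat_l with (r := Cmod k + 1) in HN; [|lra].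
  replace ((Cmod k + 1) * (eps / (Cmod k + 1))) with eps in HN by (field; lra). lra.
Qed.

Lemma series_to_minus f g A B : series_to f A -> series_to g B ->
  series_to (fun n => f n - g n)%C (A - B)%C.
Proof.
  intros H1 H2. apply series_to_scal with (k := (-(1))%C) in H2.
  pose proof (series_to_plus _ _ _ _ H1 H2) as H.
  rewrite series_to_SS in *. intros eps He; destruct (H eps He) as [N HN]; exists N; intros n Hn.
  specialize (HN n Hn). rewrite (SS_ext (fun n => f n - g n)%C (fun n => f n + (-(1)) * g n)%C) by (intros; ring).
  replace (A - B)%C with (A + (-(1)) * B)%C by ring. auto.
Qed.

Lemma series_to_ext f g A : (forall n, f n = g n) -> series_to f A -> series_to g A.
Proof.
  intros He H. rewrite series_to_SS in *. intros eps Hp; destruct (H eps Hp) as [N HN]; exists N; intros n Hn.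
  rewrite (SS_ext g f) by (intros; auto). auto.
Qed.

Lemma series_to_bound f A B : (forall N, Cmod (SS f N) <= B) -> series_to f A -> Cmod A <= B.
Proof.
  intros Hb H. rewrite series_to_SS in *. apply Rnot_lt_le; intros Hlt.
  destruct (H (Cmod A - B)) as [N HN]; [lra|]. specialize (HN N (le_n _)).
  assert (Cmod A <= Cmod (SS f N - A) + Cmod (SS f N)).
  { replace A with (- (SS f N - A) + SS f N)%C at 1 by ring.
    eapply Rle_trans; [apply Cmod_triangle|]. rewrite Cmod_opp; lra. }
  specialize (Hb N). lra.
Qed.

Lemma is_series_series_to (f : nat -> C) l : @is_series C_AbsRing C_NormedModule f l -> series_to f l.
Proof.
  intros H. rewrite series_to_SS. intros eps He. unfold is_series in H.
  assert (Hp : 0 < eps / sqrt 2) by (apply Rdiv_lt_0_compat; [lra|apply sqrt_lt_R0; lra]).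
  pose proof (proj1 (filterlim_locally (sum_n f) l) H (mkposreal _ Hp)) as H'.
  destruct H' as [N HN]. exists N. intros n Hn. specialize (HN n Hn).
  apply C_NormedModule_mixin_compat2 in HN. simpl in HN.
  replace (sqrt 2 * (eps / sqrt 2)) with eps in HN by (field; apply Rgt_not_eq, sqrt_lt_R0; lra).
  unfold sum_n in HN. unfold SS. exact HN.
Qed.

Lemma series_to_of_major (f : nat -> C) (b : nat -> R) :
  (forall n, Cmod (f n) <= b n) -> ex_series b -> exists l, series_to f l.
Proof.
  intros Hb Hs. assert (@ex_series C_AbsRing C_CompleteNormedModule f) as [l Hl].
  { apply (@ex_series_le C_AbsRing C_CompleteNormedModule f b); auto;
    try (intros n; rewrite <- Cmod_norm; auto). }
  exists l. apply is_series_series_to. exact Hl.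
Qed.

Lemma RS_le_series (b : nat -> R) : (forall n, 0 <= b n) -> ex_series b ->
  exists B, forall N, RS b N <= B.
Proof.
  intros Hpos [S0 HS]. exists S0. intros N. apply Rnot_lt_le. intros Hlt.
  unfold is_series in HS.
  assert (Hp : 0 < RS b N - S0) by lra.
  pose proof (proj1 (filterlim_locally (sum_n b) S0) HS (mkposreal _ Hp)) as H'.
  destruct H' as [M HM]. specialize (HM (max N M) ltac:(lia)). simpl in HM.
  assert (RS b N <= RS b (max N M)).
  { assert (forall k, RS b N <= RS b (N + k)).
    { induction k. rewrite Nat.add_0_r; lra. rewrite Nat.add_succ_r, RS_S. specialize (Hpos (S (N+k))). lra. }
    replace (max N M) with (N + (max N M - N))%nat by lia. auto. }
  unfold ball in HM; simpl in HM. unfold AbsRing_ball, abs, minus, plus, opp in HM; simpl in HM.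
  unfold sum_n in HM. unfold RS in *. apply Rabs_def2 in HM. lra.
Qed.

Definition cs (f : nat -> C) : C := epsilon (inhabits (RtoC 0)) (fun l => series_to f l).
Lemma cs_spec f l : series_to f l -> cs f = l.
Proof.
  intros H. unfold cs. apply (series_to_unique f); auto.
  apply (epsilon_spec (inhabits (RtoC 0)) (fun l => series_to f l)). exists l; auto.
Qed.

Lemma cpow_S (x : C) n : Cpow x (S n) = (x * Cpow x n)%C.
Proof. reflexivity. Qed.

Lemma cpow_diff (x y : C) r n : 0 < r -> Cmod x <= r -> Cmod y <= r ->
  Cmod (Cpow x n - Cpow y n) <= INR n * Cmod (x - y) * r ^ n / r.
Proof.
  intros Hr Hx Hy. induction n.
  - simpl. replace (1 - 1)%C with (RtoC 0) by ring. rewrite Cmod_0. lra.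
  - rewrite !cpow_S. replace (x * Cpow x n - y * Cpow y n)%C with (x * (Cpow x n - Cpow y n) + (x - y) * Cpow y n)%C by ring.
    eapply Rle_trans; [apply Cmod_triangle|]. rewrite !Cmod_mult, Cmod_pow.
    assert (0 <= Cmod (Cpow x n - Cpow y n)) by apply Cmod_ge_0.
    assert (0 <= Cmod (x - y)) by apply Cmod_ge_0.
    assert (Cmod y ^ n <= r ^ n) by (apply pow_incr; split; [apply Cmod_ge_0|auto]).
    assert (0 <= r ^ n) by (apply pow_le; lra).
    apply Rle_trans with (r * (INR n * Cmod (x - y) * r ^ n / r) + Cmod (x - y) * r ^ n).
    + apply Rplus_le_compat. apply Rmult_le_compat; auto; apply Cmod_ge_0. apply Rmult_le_compat_l; auto.
    + rewrite S_INR. simpl. apply Req_le. field. lra.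
Qed.

Lemma cpow_rem (x h : C) r n : 0 < r -> Cmod x <= r -> Cmod (x + h) <= r ->
  Cmod (Cpow (x + h) n - Cpow x n - h * (RtoC (INR n) * Cpow x (n - 1))) <= INR n ^ 2 * Cmod h ^ 2 * r ^ n / r ^ 2.
Proof.
  intros Hr Hx Hxh. induction n.
  - simpl. replace (1 - 1 - h * (0 * 1))%C with (RtoC 0) by ring. rewrite Cmod_0. simpl. lra.
  - assert (E : (Cpow (x + h) (S n) - Cpow x (S n) - h * (RtoC (INR (S n)) * Cpow x (S n - 1)))%C =
      (x * (Cpow (x + h) n - Cpow x n - h * (RtoC (INR n) * Cpow x (n - 1))) + h * (Cpow (x + h) n - Cpow x n))%C).
    { destruct n.
      - simpl. ring.
      - replace (S (S n) - 1)%nat with (S n) by lia. replace (S n - 1)%nat with n by lia.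
        rewrite !cpow_S. rewrite (S_INR (S n)). rewrite RtoC_plus. ring. }
    rewrite E. eapply Rle_trans; [apply Cmod_triangle|]. rewrite !Cmod_mult.
    pose proof (cpow_diff (x + h) x r n Hr Hxh Hx) as D.
    replace (x + h - x)%C with h in D by ring.
    assert (0 <= Cmod h) by apply Cmod_ge_0.
    assert (0 <= r ^ n) by (apply pow_le; lra).
    assert (0 <= INR n) by apply pos_INR.
    apply Rle_trans with (r * (INR n ^ 2 * Cmod h ^ 2 * r ^ n / r ^ 2) + Cmod h * (INR n * Cmod h * r ^ n / r)).
    + apply Rplus_le_compat. apply Rmult_le_compat; auto; apply Cmod_ge_0. apply Rmult_le_compat_l; auto.
    + assert (0 <= Cmod h ^ 2 * r ^ n / r) by (apply Rmult_le_pos; [apply Rmult_le_pos; [apply pow2_ge_0|auto]|left; apply Rinv_0_lt_compat; lra]).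
      replace (r * (INR n ^ 2 * Cmod h ^ 2 * r ^ n / r ^ 2) + Cmod h * (INR n * Cmod h * r ^ n / r))
        with ((INR n ^ 2 + INR n) * (Cmod h ^ 2 * r ^ n / r)) by (field; lra).
      replace (INR (S n) ^ 2 * Cmod h ^ 2 * r ^ S n / r ^ 2) with (INR (S n) ^ 2 * (Cmod h ^ 2 * r ^ n / r)) by (simpl; field; lra).
      apply Rmult_le_compat_r; auto. rewrite S_INR. nra.
Qed.

Fixpoint amax (phi : nat -> R) (k : nat) : nat :=
  match k with
  | O => O
  | S k' => if Rle_dec (phi (S k')) (phi (amax phi k')) then amax phi k' else S k'
  end.

Lemma amax_le phi k : (amax phi k <= k)%nat.
Proof. induction k; simpl; auto. destruct Rle_dec; lia. Qed.

Lemma amax_ge phi k m : (m <= k)%nat -> phi m <= phi (amax phi k).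
Proof.
  induction k; intros Hm.
  - replace m with O by lia. simpl. lra.
  - simpl. destruct (Nat.eq_dec m (S k)) as [->|Hne].
    + destruct Rle_dec; lra.
    + specialize (IHk ltac:(lia)). destruct Rle_dec; lra.
Qed.

Definition pm (al : nat -> C) (r : R) (n : nat) : R := (INR n + 1) ^ 2 * Cmod (al n) * r ^ n.
Definition Fs (al : nat -> C) (x : C) : C := cs (fun n => al n * Cpow x n)%C.
Definition gt_ (al : nat -> C) (x : C) (n : nat) : C := (RtoC (INR n) * al n * Cpow x (n - 1))%C.
Definition Gs (al : nat -> C) (x : C) : C := cs (gt_ al x).

Lemma pm_nonneg al r n : 0 <= r -> 0 <= pm al r n.
Proof. intros. unfold pm. apply Rmult_le_pos; [apply Rmult_le_pos; [apply pow2_ge_0|apply Cmod_ge_0]|apply pow_le; auto]. Qed.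

Section Analytic.
Variables (al : nat -> C) (r B : R).
Hypothesis Hr : 0 < r.
Hypothesis Hs : ex_series (pm al r).
Hypothesis HB : forall N, RS (pm al r) N <= B.

Lemma term_F_bound x n : Cmod x <= r -> Cmod (al n * Cpow x n) <= pm al r n.
Proof.
  intros Hx. rewrite Cmod_mult, Cmod_pow. unfold pm.
  assert (Cmod x ^ n <= r ^ n) by (apply pow_incr; split; [apply Cmod_ge_0|auto]).
  assert (1 <= (INR n + 1) ^ 2) by (pose proof (pos_INR n); nra).
  pose proof (Cmod_ge_0 (al n)). assert (0 <= Cmod x ^ n) by (apply pow_le; apply Cmod_ge_0).
  rewrite Rmult_assoc. apply Rle_trans with (1 * (Cmod (al n) * r ^ n)); [nra|].
  apply Rmult_le_compat_r; auto. apply Rmult_le_pos; auto. apply pow_le; lra.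
Qed.

Lemma Fs_spec x : Cmod x <= r -> series_to (fun n => al n * Cpow x n)%C (Fs al x).
Proof.
  intros Hx. destruct (series_to_of_major (fun n => al n * Cpow x n)%C (pm al r)) as [l Hl]; auto.
  - intros; apply term_F_bound; auto.
  - unfold Fs. rewrite (cs_spec _ l); auto.
Qed.

Lemma term_G_bound x n : Cmod x <= r -> Cmod (gt_ al x n) <= pm al r n / r.
Proof.
  intros Hx. unfold gt_, pm. rewrite !Cmod_mult, Cmod_pow, Cmod_R, Rabs_pos_eq by apply pos_INR.
  pose proof (Cmod_ge_0 (al n)). pose proof (pos_INR n).
  destruct n.
  - simpl. rewrite Rmult_0_l, !Rmult_0_l. apply Rmult_le_pos; [|left; apply Rinv_0_lt_compat; auto].
    nra.
  - replace (S n - 1)%nat with n by lia.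
    assert (Cmod x ^ n <= r ^ n) by (apply pow_incr; split; [apply Cmod_ge_0|auto]).
    assert (0 <= Cmod x ^ n) by (apply pow_le; apply Cmod_ge_0).
    assert (0 <= r ^ n) by (apply pow_le; lra).
    replace ((INR (S n) + 1) ^ 2 * Cmod (al (S n)) * r ^ S n / r) with ((INR (S n) + 1) ^ 2 * Cmod (al (S n)) * r ^ n) by (simpl; field; lra).
    assert (INR (S n) <= (INR (S n) + 1) ^ 2) by nra.
    apply Rle_trans with (INR (S n) * Cmod (al (S n)) * r ^ n).
    + apply Rmult_le_compat_l; auto. apply Rmult_le_pos; auto.
    + apply Rmult_le_compat_r; auto. apply Rmult_le_compat_r; auto.
Qed.

Lemma Gs_spec x : Cmod x <= r -> series_to (gt_ al x) (Gs al x).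
Proof.
  intros Hx. destruct (series_to_of_major (gt_ al x) (fun n => pm al r n * / r)) as [l Hl]; auto.
  - intros; apply term_G_bound; auto.
  - apply ex_series_scal_r; auto.
  - unfold Gs. rewrite (cs_spec _ l); auto.
Qed.

Lemma B_nonneg : 0 <= B.
Proof. apply Rle_trans with (RS (pm al r) 0); [apply RS_nonneg; intros; apply pm_nonneg; lra|auto]. Qed.

Lemma Fs_rem x h : Cmod x <= r -> Cmod (x + h) <= r ->
  Cmod (Fs al (x + h) - Fs al x - h * Gs al x) <= Cmod h ^ 2 * (B / r ^ 2).
Proof.
  intros Hx Hxh.
  pose proof (series_to_minus _ _ _ _ (series_to_minus _ _ _ _ (Fs_spec _ Hxh) (Fs_spec _ Hx)) (series_to_scal _ h _ (Gs_spec _ Hx))) as H.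
  refine (series_to_bound _ _ _ _ H).
  intros N. eapply Rle_trans; [apply SS_bound with (b := fun n => Cmod h ^ 2 / r ^ 2 * pm al r n)|].
  - intros n _. unfold gt_, pm.
    replace (al n * Cpow (x + h) n - al n * Cpow x n - h * (RtoC (INR n) * al n * Cpow x (n - 1)))%C
      with (al n * (Cpow (x + h) n - Cpow x n - h * (RtoC (INR n) * Cpow x (n - 1))))%C by ring.
    rewrite Cmod_mult. pose proof (cpow_rem x h r n Hr Hx Hxh).
    pose proof (Cmod_ge_0 (al n)).
    apply Rle_trans with (Cmod (al n) * (INR n ^ 2 * Cmod h ^ 2 * r ^ n / r ^ 2)).
    + apply Rmult_le_compat_l; auto.
    + assert (0 <= r ^ n) by (apply pow_le; lra). assert (0 < r ^ 2) by (apply pow_pos'; lra).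
      assert (0 <= Cmod h ^ 2) by apply pow2_ge_0. pose proof (pos_INR n).
      assert (INR n ^ 2 <= (INR n + 1) ^ 2) by nra.
      apply Rle_trans with (Cmod (al n) * ((INR n + 1) ^ 2 * Cmod h ^ 2 * r ^ n / r ^ 2)).
      * apply Rmult_le_compat_l; auto. unfold Rdiv. apply Rmult_le_compat_r; [left; apply Rinv_0_lt_compat; auto|].
        apply Rmult_le_compat_r; auto. apply Rmult_le_compat_r; auto.
      * apply Req_le. field. lra.
  - rewrite RS_scal. specialize (HB N). assert (0 < r ^ 2) by (apply pow_pos'; lra).
    assert (0 <= Cmod h ^ 2 / r ^ 2) by (apply Rmult_le_pos; [apply pow2_ge_0|left; apply Rinv_0_lt_compat; auto]).
    replace (Cmod h ^ 2 * (B / r ^ 2)) with (Cmod h ^ 2 / r ^ 2 * B) by (field; lra).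
    apply Rmult_le_compat_l; auto.
Qed.


Lemma grid (u0 d : C) : (forall t, 0 <= t <= 1 -> Cmod (u0 + RtoC t * d) <= r) ->
  exists t, 0 <= t <= 1 /\ Cmod (Fs al (u0 + d) - Fs al u0) <= Cmod d * (Cmod (Gs al (u0 + RtoC t * d)) + 1).
Proof.
  intros Hseg. set (C0 := B / r ^ 2).
  assert (HC0 : 0 <= C0) by (unfold C0; apply Rmult_le_pos; [apply B_nonneg|left; apply Rinv_0_lt_compat; apply pow_pos'; lra]).
  destruct (INR_archimed 1 (Cmod d * C0)) as [k0 Hk0]; [lra|].
  set (K := S k0). assert (HK : 0 < INR K) by (unfold K; rewrite S_INR; pose proof (pos_INR k0); lra).
  assert (HK2 : Cmod d * C0 <= INR K) by (unfold K; rewrite S_INR; lra).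
  set (x := fun j : nat => (u0 + RtoC (INR j / INR K) * d)%C).
  assert (Hx : forall j, (j <= K)%nat -> Cmod (x j) <= r).
  { intros j Hj. apply Hseg. split. apply Rmult_le_pos; [apply pos_INR|left; apply Rinv_0_lt_compat; auto].
    apply Rmult_le_reg_r with (INR K); auto. unfold Rdiv. rewrite Rmult_assoc, Rinv_l by lra. rewrite Rmult_1_r, Rmult_1_l.
    apply le_INR; auto. }
  set (phi := fun j => Cmod (Gs al (x j))).
  set (js := amax phi k0). set (Gm := phi js).
  assert (Hjs : (js <= k0)%nat) by apply amax_le.
  set (h := (RtoC (1 / INR K) * d)%C).
  assert (Hh : Cmod h = Cmod d / INR K).
  { unfold h. rewrite Cmod_mult, Cmod_R, Rabs_pos_eq. field; lra. left. apply Rdiv_lt_0_compat; lra. }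
  assert (Hstep : forall j, x (S j) = (x j + h)%C).
  { intros j. unfold x, h. rewrite S_INR. rewrite <- (Cplus_assoc u0). f_equal.
    rewrite <- Cmult_plus_distr_r. f_equal. rewrite <- RtoC_plus. f_equal. field. lra. }
  assert (Hind : forall J, (J <= K)%nat -> Cmod (Fs al (x J) - Fs al u0) <= INR J * (Cmod h * Gm + Cmod h ^ 2 * C0)).
  { induction J; intros HJ.
    - simpl. replace (x 0%nat) with u0 by (unfold x; simpl; rewrite Rdiv_0_l; ring_simplify; auto).
      replace (Fs al u0 - Fs al u0)%C with (RtoC 0) by ring. rewrite Cmod_0. lra.
    - rewrite Hstep. specialize (IHJ ltac:(lia)).
      replace (Fs al (x J + h) - Fs al u0)%C with ((Fs al (x J + h) - Fs al (x J) - h * Gs al (x J)) + h * Gs al (x J) + (Fs al (x J) - Fs al u0))%C by ring.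
      eapply Rle_trans; [apply Cmod_triangle|]. eapply Rle_trans; [apply Rplus_le_compat_r; apply Cmod_triangle|].
      pose proof (Fs_rem (x J) h (Hx J ltac:(lia)) ltac:(rewrite <- Hstep; apply Hx; lia)) as R1.
      rewrite Cmod_mult.
      assert (phi J <= Gm) by (apply amax_ge; unfold K in HJ; lia).
      assert (0 <= Cmod h) by apply Cmod_ge_0.
      assert (Cmod h * Cmod (Gs al (x J)) <= Cmod h * Gm) by (apply Rmult_le_compat_l; auto).
      rewrite S_INR. fold C0 in R1. lra. }
  exists (INR js / INR K). split.
  { split. apply Rmult_le_pos; [apply pos_INR|left; apply Rinv_0_lt_compat; auto].
    apply Rmult_le_reg_r with (INR K); auto. unfold Rdiv. rewrite Rmult_assoc, Rinv_l by lra. rewrite Rmult_1_r, Rmult_1_l.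
    apply le_INR; unfold K; lia. }
  specialize (Hind K (le_n _)).
  replace (x K) with (u0 + d)%C in Hind by (unfold x; unfold Rdiv; rewrite Rinv_r by lra; ring).
  eapply Rle_trans; [exact Hind|]. rewrite Hh. fold (x js). fold (phi js). fold Gm.
  assert (0 <= Gm) by apply Cmod_ge_0. pose proof (Cmod_ge_0 d).
  replace (INR K * (Cmod d / INR K * Gm + (Cmod d / INR K) ^ 2 * C0)) with (Cmod d * Gm + Cmod d * (Cmod d * C0 / INR K)) by (field; lra).
  assert (Cmod d * C0 / INR K <= 1).
  { apply Rmult_le_reg_r with (INR K); auto. unfold Rdiv. rewrite Rmult_assoc, Rinv_l by lra. lra. }
  nra.
Qed.

End Analytic.

Lemma bern_inv x K : 0 <= x -> (1 + x) ^ K * (1 - INR K * x) <= 1.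
Proof.
  intros Hx. induction K.
  - simpl. lra.
  - rewrite S_INR. simpl. assert (0 <= (1 + x) ^ K) by (apply pow_le; lra).
    destruct (Rle_dec 0 (1 - (INR K + 1) * x)) as [Hp|Hn].
    + apply Rle_trans with ((1 + x) ^ K * (1 - INR K * x)); auto.
      replace ((1 + x) * (1 + x) ^ K * (1 - (INR K + 1) * x)) with ((1 + x) ^ K * ((1 + x) * (1 - (INR K + 1) * x))) by ring.
      apply Rmult_le_compat_l; auto.
      pose proof (pos_INR K). nra.
    + assert (0 <= (1 + x) * (1 + x) ^ K) by (apply Rmult_le_pos; lra). nra.
Qed.

Lemma cpow_1eta (eta : C) n : Cmod (Cpow (1 + eta) n - 1) <= (1 + Cmod eta) ^ n - 1.
Proof.
  induction n.
  - simpl. replace (1 - 1)%C with (RtoC 0) by ring. rewrite Cmod_0. lra.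
  - rewrite cpow_S. replace ((1 + eta) * Cpow (1 + eta) n - 1)%C with ((1 + eta) * (Cpow (1 + eta) n - 1) + eta)%C by ring.
    eapply Rle_trans; [apply Cmod_triangle|]. rewrite Cmod_mult.
    assert (Cmod (1 + eta) <= 1 + Cmod eta) by (eapply Rle_trans; [apply Cmod_triangle|rewrite Cmod_1; lra]).
    pose proof (Cmod_ge_0 (Cpow (1 + eta) n - 1)). pose proof (Cmod_ge_0 (1+eta)).
    simpl. assert (Cmod (1 + eta) * Cmod (Cpow (1 + eta) n - 1) <= (1 + Cmod eta) * ((1 + Cmod eta) ^ n - 1)).
    { apply Rmult_le_compat; auto. } lra.
Qed.

Fixpoint Qf (c : nat -> C) (T : nat -> C) (k : nat) : C :=
  match k with O => RtoC 0 | S k' => (Qf c T k' + (c (S k') - c k') * T k')%C end.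

Lemma abel_id (t c : nat -> C) K : c O = RtoC 0 ->
  SS (fun n => t n * c n)%C K = (c K * SS t K - Qf c (SS t) K)%C.
Proof.
  intros H0. induction K.
  - rewrite !SS_0. simpl. ring.
  - rewrite !SS_S, IHK. simpl. ring.
Qed.

Lemma abel (t : nat -> C) (eta : C) K Bd :
  (forall m, (m <= K)%nat -> Cmod (SS t m) <= Bd) -> INR K * Cmod eta <= /2 ->
  Cmod (SS (fun n => t n * (Cpow (1 + eta) n - 1))%C K) <= 4 * Bd * INR K * Cmod eta.
Proof.
  intros HT HK. set (x := Cmod eta) in *. assert (Hx : 0 <= x) by apply Cmod_ge_0.
  assert (HBd : 0 <= Bd) by (eapply Rle_trans; [apply Cmod_ge_0|apply (HT O); lia]).
  set (c := fun n => (Cpow (1 + eta) n - 1)%C).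
  change (SS (fun n => t n * (Cpow (1 + eta) n - 1))%C K) with (SS (fun n => t n * c n)%C K).
  rewrite (abel_id t c K) by (unfold c; simpl; ring).
  assert (HpK : (1 + x) ^ K <= 2).
  { pose proof (bern_inv x K Hx). assert (0 <= (1+x)^K) by (apply pow_le; lra).
    assert ((1+x)^K * (INR K * x) <= (1+x)^K * /2) by (apply Rmult_le_compat_l; lra).
    assert ((1 + x) ^ K * (1 - INR K * x) = (1+x)^K - (1+x)^K * (INR K * x)) by ring. lra. }
  assert (Hmono : forall n, (n <= K)%nat -> (1 + x) ^ n <= (1 + x) ^ K) by (intros; apply Rle_pow; [lra|auto]).
  assert (HcK : Cmod (c K) <= 2 * INR K * x).
  { unfold c. eapply Rle_trans; [apply cpow_1eta|]. fold x. pose proof (bern_inv x K Hx).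
    assert (0 <= INR K * x) by (apply Rmult_le_pos; auto; apply pos_INR).
    assert ((1+x)^K * (INR K * x) <= 2 * (INR K * x)) by (apply Rmult_le_compat_r; lra).
    assert ((1 + x) ^ K * (1 - INR K * x) = (1+x)^K - (1+x)^K * (INR K * x)) by ring. lra. }
  assert (HQ : forall k, (k <= K)%nat -> Cmod (Qf c (SS t) k) <= INR k * x * (1 + x) ^ k * Bd).
  { induction k; intros Hk.
    - simpl. rewrite Cmod_0. lra.
    - simpl Qf. eapply Rle_trans; [apply Cmod_triangle|]. specialize (IHk ltac:(lia)).
      rewrite Cmod_mult.
      assert (Hd : Cmod (c (S k) - c k) <= x * (1 + x) ^ k).
      { unfold c. replace (Cpow (1 + eta) (S k) - 1 - (Cpow (1 + eta) k - 1))%C with (eta * Cpow (1 + eta) k)%C by (simpl; ring).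
        rewrite Cmod_mult, Cmod_pow. fold x. apply Rmult_le_compat_l; auto. apply pow_incr. split; [apply Cmod_ge_0|].
        eapply Rle_trans; [apply Cmod_triangle|rewrite Cmod_1; fold x; lra]. }
      assert (HTk : Cmod (SS t k) <= Bd) by (apply HT; lia).
      assert (0 <= (1 + x) ^ k) by (apply pow_le; lra).
      assert ((1 + x) ^ k <= (1 + x) ^ S k) by (simpl; nra).
      assert (Cmod (c (S k) - c k) * Cmod (SS t k) <= x * (1 + x) ^ k * Bd) by (apply Rmult_le_compat; auto; apply Cmod_ge_0).
      rewrite S_INR. pose proof (pos_INR k).
      assert (INR k * x * (1 + x) ^ k * Bd <= INR k * x * (1 + x) ^ S k * Bd).
      { apply Rmult_le_compat_r; auto. apply Rmult_le_compat_l; auto. apply Rmult_le_pos; auto. }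
      assert (x * (1 + x) ^ k * Bd <= x * (1 + x) ^ S k * Bd).
      { apply Rmult_le_compat_r; auto. apply Rmult_le_compat_l; auto. }
      nra. }
  eapply Rle_trans; [apply Cmod_triangle|]. rewrite Cmod_opp, Cmod_mult.
  specialize (HQ K (le_n _)). specialize (HT K (le_n _)). pose proof (pos_INR K).
  assert (Cmod (c K) * Cmod (SS t K) <= 2 * INR K * x * Bd) by (apply Rmult_le_compat; auto; apply Cmod_ge_0).
  assert (INR K * x * (1 + x) ^ K * Bd <= INR K * x * 2 * Bd).
  { apply Rmult_le_compat_r; auto. apply Rmult_le_compat_l; auto. apply Rmult_le_pos; auto. }
  fold x. nra.
Qed.

Lemma series_n2_geom th : 0 < th < 1 -> ex_series (fun n => (INR n + 1) ^ 2 * th ^ n).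
Proof.
  intros Hth.
  assert (H : ex_series (fun n => Rabs ((INR n + 1) ^ 2 * th ^ n))).
  { apply ex_series_DAlembert with th; [lra| |].
    - intros n. apply Rgt_not_eq. apply Rmult_lt_0_compat. pose proof (pos_INR n). nra. apply pow_pos'; lra.
    - apply is_lim_seq_ext with (fun n => th * ((1 + / INR (S n)) * (1 + / INR (S n)))).
      + intros n. pose proof (pos_INR n). assert (0 < th ^ n) by (apply pow_pos'; lra).
        rewrite Rabs_pos_eq.
        * rewrite !S_INR. simpl. field. repeat split; lra.
        * rewrite !S_INR. simpl. apply Rmult_le_pos; [apply Rmult_le_pos|]; [nra|nra|].
          left. apply Rinv_0_lt_compat. apply Rmult_lt_0_compat; nra.
      + assert (H2 : is_lim_seq (fun n => th * ((1 + / INR (S n)) * (1 + / INR (S n)))) (Rbar_mult th ((1+0)*(1+0)))).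
        2:{ simpl in H2. replace (th * ((1+0)*(1+0))) with th in H2 by ring. exact H2. }
        apply is_lim_seq_scal_l.
        assert (H0 : is_lim_seq (fun n => / INR (S n)) 0).
        { replace (Finite 0) with (Rbar_inv p_infty) by reflexivity. apply is_lim_seq_inv; [|discriminate].
          apply (is_lim_seq_incr_1 INR p_infty). apply is_lim_seq_INR. }
        assert (H1 : is_lim_seq (fun n => 1 + / INR (S n)) (1 + 0)) by (apply is_lim_seq_plus'; [apply is_lim_seq_const|exact H0]).
        apply is_lim_seq_mult'; exact H1. }
  apply ex_series_ext with (2 := H). intros n. apply Rabs_pos_eq. apply Rmult_le_pos; [apply pow2_ge_0|apply pow_le; lra].
Qed.

Lemma maj_of_root (al : nat -> C) r2 r3 : 0 < r2 < r3 ->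
  (exists n0, forall n, (n0 <= n)%nat -> Cmod (al n) * r3 ^ n <= 1) -> ex_series (pm al r2).
Proof.
  intros Hr [n0 Hn0]. set (th := r2 / r3).
  assert (Hth : 0 < th < 1). { unfold th. split. apply Rdiv_lt_0_compat; lra. apply Rmult_lt_reg_r with r3; [lra|].
    unfold Rdiv. rewrite Rmult_assoc, Rinv_l by lra. lra. }
  apply (ex_series_incr_n _ n0).
  apply (@ex_series_le R_AbsRing R_CompleteNormedModule) with (b := fun k => (INR (n0 + k) + 1) ^ 2 * th ^ (n0 + k)).
  - intros k. change (norm (pm al r2 (n0 + k))) with (Rabs (pm al r2 (n0 + k))).
    rewrite Rabs_pos_eq by (apply pm_nonneg; lra). unfold pm.
    set (n := (n0 + k)%nat). specialize (Hn0 n ltac:(unfold n; lia)).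
    rewrite Rmult_assoc. apply Rmult_le_compat_l; [apply pow2_ge_0|].
    assert (r2 ^ n = r3 ^ n * th ^ n).
    { unfold th. rewrite <- Rpow_mult_distr. f_equal. field. lra. }
    rewrite H, <- Rmult_assoc. rewrite <- (Rmult_1_l (th ^ n)) at 2. apply Rmult_le_compat_r; auto.
    apply pow_le; lra.
  - apply (ex_series_incr_n (fun n => (INR n + 1) ^ 2 * th ^ n) n0). apply series_n2_geom; auto.
Qed.

Lemma pow_sum_le a b n : 0 <= a -> 0 <= b -> (1 <= n)%nat -> a ^ n + b ^ n <= (a + b) ^ n.
Proof.
  intros Ha Hb Hn. induction n; [lia|]. destruct n.
  - simpl. lra.
  - specialize (IHn ltac:(lia)). simpl in *.
    assert (0 <= a ^ n) by (apply pow_le; lra). assert (0 <= b ^ n) by (apply pow_le; lra).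
    assert (0 <= a * a ^ n) by (apply Rmult_le_pos; lra). assert (0 <= b * b ^ n) by (apply Rmult_le_pos; lra).
    nra.
Qed.

Lemma nroot_bound n c lam : (1 <= n)%nat -> 0 <= c -> 0 < lam -> nroot n c < lam -> c <= lam ^ n.
Proof.
  intros Hn Hc Hl H. unfold nroot in H. destruct (Rle_dec c 0).
  - assert (c = 0) by lra. subst. apply pow_le; lra.
  - assert (Hc' : 0 < c) by lra.
    assert (E : c = Rpower c (/ INR n) ^ n).
    { rewrite <- Rpower_pow by (apply exp_pos). rewrite Rpower_mult. rewrite Rinv_l. rewrite Rpower_1; auto.
      apply not_0_INR. lia. }
    rewrite E. apply pow_incr. split; [left; apply exp_pos|lra].
Qed.

Lemma rad_point (a2 a1 : nat -> C) V s ka :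
  0 <= V -> 0 < s -> 0 <= ka ->
  Rbar_lt (Finite (V + s)) (rbar_inv (LimSup_seq (fun n => nroot n (Cmod (a2 n))))) ->
  (forall n, (1 <= n)%nat -> Cmod (a1 n) <= Cmod (a2 n) + ka ^ n) ->
  ka * (V + s) * (V + s) < s / 4 ->
  exists n0, forall n, (n0 <= n)%nat -> Cmod (a1 n) * (V + 3 * s / 4) ^ n <= 1.
Proof.
  intros HV Hs Hka Hrad Hcmp Hka2.
  set (u := fun n => nroot n (Cmod (a2 n))).
  pose proof (proj2_sig (ex_LimSup_seq u)) as HL. fold (LimSup_seq u) in HL. fold u in Hrad.
  set (r3 := V + 3 * s / 4).
  destruct (LimSup_seq u) as [l| |] eqn:EL; simpl in Hrad.
  2:{ lra. }
  2:{ lra. }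
  assert (Hl : 0 <= l /\ l * (V + s) < 1).
  { destruct (Req_EM_T l 0) as [->|Hne]; simpl in Hrad.
    - lra.
    - destruct (Rlt_le_dec l 0) as [Hneg|Hpos].
      + assert (/ l < 0) by (apply Rinv_lt_0_compat; auto). lra.
      + split; auto. assert (0 < l) by lra. apply Rmult_lt_compat_l with (r := l) in Hrad; auto.
        rewrite Rinv_r in Hrad by auto. lra. }
  destruct Hl as [Hl0 Hl1].
  assert (Hr3 : 0 < r3) by (unfold r3; lra).
  assert (Hm1 : r3 * l <= 1 - s / (4 * (V + s))).
  { assert (r3 * l = (1 - s / (4 * (V + s))) * (l * (V + s))) by (unfold r3; field; lra).
    rewrite H. assert (0 <= 1 - s / (4 * (V + s))).
    { assert (s / (4 * (V + s)) <= 1). apply Rmult_le_reg_r with (4 * (V + s)); [lra|].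
      unfold Rdiv. rewrite Rmult_assoc, Rinv_l by lra. lra. lra. }
    assert (0 <= l * (V + s)) by nra. nra. }
  assert (Hm2 : r3 * ka < s / (4 * (V + s))).
  { apply Rle_lt_trans with ((V + s) * ka). apply Rmult_le_compat_r; auto; unfold r3; lra.
    apply Rmult_lt_reg_r with (V + s); [lra|].
    replace (s / (4 * (V + s)) * (V + s)) with (s/4) by (field; lra).
    replace ((V + s) * ka * (V + s)) with (ka * (V + s) * (V + s)) by ring. lra. }
  set (eta := (1 - r3 * l - r3 * ka) / (2 * r3)).
  assert (Heta : 0 < eta) by (unfold eta; apply Rdiv_lt_0_compat; lra).
  destruct (proj2 (HL (mkposreal eta Heta))) as [N HN]. simpl in HN.
  exists (max N 1). intros n Hn.
  specialize (HN n ltac:(lia)). unfold u in HN.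
  assert (Hb : Cmod (a2 n) <= (l + eta) ^ n) by (apply nroot_bound; auto; [lia|apply Cmod_ge_0|lra]).
  specialize (Hcmp n ltac:(lia)).
  assert (Cmod (a1 n) <= (l + eta + ka) ^ n).
  { eapply Rle_trans; [exact Hcmp|]. eapply Rle_trans; [apply Rplus_le_compat_r; exact Hb|].
    apply pow_sum_le; auto; try lra; lia. }
  assert (Hprod : r3 * (l + eta + ka) <= 1) by (unfold eta; field_simplify; [|lra]; lra).
  apply Rle_trans with ((l + eta + ka) ^ n * r3 ^ n).
  - apply Rmult_le_compat_r; auto. apply pow_le; lra.
  - rewrite <- Rpow_mult_distr. apply pow_le1. split; [apply Rmult_le_pos; lra|]. lra.
Qed.

Section Nets.
Variable rho : R -> R.
Hypothesis Hg : is_gauge rho.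

Lemma ev0_rho : ev0 (fun e => 0 < rho e <= /4).
Proof. apply gauge_small; auto. Qed.

Lemma rho_pow_le q k e : 0 < rho e <= /4 -> (k <= q)%nat -> rho e ^ q <= rho e ^ k.
Proof. intros H Hk. apply pow_decr; auto. lra. Qed.

Lemma rho_pow_pos q e : 0 < rho e <= /4 -> 0 < rho e ^ q.
Proof. intros; apply pow_pos'; lra. Qed.

Lemma rho_pow_S q e : 0 < rho e <= /4 -> rho e ^ S q <= / 4 * rho e ^ q.
Proof. intros H. simpl. pose proof (rho_pow_pos q e H). nra. Qed.

Lemma modR_iff x : moderateR rho x <-> exists N, ev0 (fun e => Rabs (x e) * rho e ^ N <= 1).
Proof.
  split; intros [N HN]; exists N.
  - apply ev0_mono with (fun e => (Rabs (x e) <= / rho e ^ N) /\ 0 < rho e <= /4).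
    + apply ev0_and; [exact HN|apply ev0_rho].
    + intros e _ [H1 H2]. pose proof (rho_pow_pos N e H2).
      apply Rmult_le_reg_r with (/ rho e ^ N). apply Rinv_0_lt_compat; auto.
      rewrite Rmult_assoc, Rinv_r, Rmult_1_l, Rmult_1_r by lra. auto.
  - apply ev0_mono with (fun e => (Rabs (x e) * rho e ^ N <= 1) /\ 0 < rho e <= /4).
    + apply ev0_and; [exact HN|apply ev0_rho].
    + intros e _ [H1 H2]. pose proof (rho_pow_pos N e H2). unfold moderateR.
      apply Rmult_le_reg_r with (rho e ^ N); auto. rewrite Rinv_l by lra. auto.
Qed.

Lemma negC_iff x : negligibleC rho x <-> forall q, ev0 (fun e => Cmod (x e) <= rho e ^ q).
Proof.
  unfold negligibleC, negligibleR. split; intros H q; apply ev0_mono with (1 := H q); intros e _;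
  rewrite Rabs_pos_eq by apply Cmod_ge_0; auto.
Qed.

Lemma modC_iff x : moderateC rho x <-> exists N, ev0 (fun e => Cmod (x e) * rho e ^ N <= 1).
Proof.
  unfold moderateC. rewrite modR_iff. split; intros [N H]; exists N; apply ev0_mono with (1 := H); intros e _;
  rewrite Rabs_pos_eq by apply Cmod_ge_0; auto.
Qed.



Lemma negl_from (x d : R -> C) E :
  ev0 (fun e => Cmod (x e) * rho e ^ E <= 16 * Cmod (d e)) -> negligibleC rho d -> negligibleC rho x.
Proof.
  rewrite !negC_iff. intros H Hd q. apply ev0_mono with (fun e => (Cmod (x e) * rho e ^ E <= 16 * Cmod (d e)) /\
     (Cmod (d e) <= rho e ^ (q + E + 2)) /\ 0 < rho e <= /4).
  - apply ev0_and; auto. apply ev0_and; [apply Hd|apply ev0_rho].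
  - intros e _ [H1 [H2 H3]]. pose proof (rho_pow_pos E e H3). pose proof (rho_pow_pos q e H3).
    apply Rmult_le_reg_r with (rho e ^ E); auto.
    replace (rho e ^ (q + E + 2)) with (rho e ^ q * rho e ^ E * (rho e * rho e)) in H2 by (rewrite !pow_add; simpl; ring).
    assert (rho e ^ q * rho e ^ E * (rho e * rho e) <= rho e ^ q * rho e ^ E * /16).
    { apply Rmult_le_compat_l. apply Rmult_le_pos; lra. nra. }
    nra.
Qed.

Lemma negl_mod (x : R -> C) : negligibleC rho x -> moderateC rho x.
Proof.
  rewrite negC_iff, modC_iff. intros H. exists 0%nat. apply ev0_mono with (fun e => Cmod (x e) <= rho e ^ 0); [apply H|].
  intros e _ H1. simpl in *. lra.
Qed.

Lemma negl_plus (x y : R -> C) : negligibleC rho x -> negligibleC rho y -> negligibleC rho (fun e => x e + y e)%C.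
Proof.
  rewrite !negC_iff. intros Hx Hy q. apply ev0_mono with (fun e => (Cmod (x e) <= rho e ^ S q) /\ (Cmod (y e) <= rho e ^ S q) /\ 0 < rho e <= /4).
  - apply ev0_and; [apply Hx|apply ev0_and; [apply Hy|apply ev0_rho]].
  - intros e _ [H1 [H2 H3]]. pose proof (rho_pow_S q e H3). pose proof (rho_pow_pos q e H3).
    eapply Rle_trans; [apply Cmod_triangle|]. lra.
Qed.

Lemma negl_opp (x : R -> C) : negligibleC rho x -> negligibleC rho (fun e => - x e)%C.
Proof. rewrite !negC_iff. intros H q. apply ev0_mono with (1 := H q). intros e _ H1.
  rewrite Cmod_opp. auto. Qed.

Lemma negl_minus (x y : R -> C) : negligibleC rho x -> negligibleC rho y -> negligibleC rho (fun e => x e - y e)%C.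
Proof. intros. apply negl_plus; auto. apply negl_opp; auto. Qed.

Lemma negl_ext (x y : R -> C) : (forall e, x e = y e) -> negligibleC rho x -> negligibleC rho y.
Proof. rewrite !negC_iff. intros He H q. apply ev0_mono with (1 := H q). intros e _. rewrite He; auto. Qed.

Lemma negl_le (x y : R -> C) : ev0 (fun e => Cmod (x e) <= Cmod (y e)) -> negligibleC rho y -> negligibleC rho x.
Proof. rewrite !negC_iff. intros H Hy q. apply ev0_mono with (1 := ev0_and _ _ H (Hy q)). intros e _ [H1 H2]. lra. Qed.

Lemma mod_plus (x y : R -> C) : moderateC rho x -> moderateC rho y -> moderateC rho (fun e => x e + y e)%C.
Proof.
  rewrite !modC_iff. intros [N1 H1] [N2 H2]. exists (N1 + N2 + 1)%nat.
  apply ev0_mono with (1 := ev0_and _ _ H1 (ev0_and _ _ H2 ev0_rho)). intros e _ [A1 [A2 A3]].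
  pose proof (rho_pow_pos N1 e A3). pose proof (rho_pow_pos N2 e A3).
  assert (HH : rho e ^ (N1 + N2 + 1) = rho e ^ N1 * rho e ^ N2 * rho e) by (rewrite !pow_add; simpl; ring).
  rewrite HH. pose proof (Cmod_triangle (x e) (y e)). pose proof (Cmod_ge_0 (x e + y e)).
  assert (rho e ^ N2 <= 1) by (apply pow_le1; lra). assert (rho e ^ N1 <= 1) by (apply pow_le1; lra).
  assert (Cmod (x e) * (rho e ^ N1 * rho e ^ N2 * rho e) <= 1 * (rho e ^ N2 * rho e)).
  { replace (Cmod (x e) * (rho e ^ N1 * rho e ^ N2 * rho e)) with (Cmod (x e) * rho e ^ N1 * (rho e ^ N2 * rho e)) by ring.
    apply Rmult_le_compat_r; auto. apply Rmult_le_pos; lra. }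
  assert (Cmod (y e) * (rho e ^ N1 * rho e ^ N2 * rho e) <= 1 * (rho e ^ N1 * rho e)).
  { replace (Cmod (y e) * (rho e ^ N1 * rho e ^ N2 * rho e)) with (Cmod (y e) * rho e ^ N2 * (rho e ^ N1 * rho e)) by ring.
    apply Rmult_le_compat_r; auto. apply Rmult_le_pos; lra. }
  assert (0 <= rho e ^ N1 * rho e ^ N2 * rho e) by (apply Rmult_le_pos; [apply Rmult_le_pos|]; lra).
  apply Rle_trans with ((Cmod (x e) + Cmod (y e)) * (rho e ^ N1 * rho e ^ N2 * rho e)).
  apply Rmult_le_compat_r; auto. nra.
Qed.

Lemma mod_ext (x y : R -> C) : (forall e, x e = y e) -> moderateC rho x -> moderateC rho y.
Proof. rewrite !modC_iff. intros He [N H]. exists N. apply ev0_mono with (1 := H). intros e _. rewrite He; auto. Qed.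

Lemma mod_opp (x : R -> C) : moderateC rho x -> moderateC rho (fun e => - x e)%C.
Proof. rewrite !modC_iff. intros [N H]. exists N. apply ev0_mono with (1 := H). intros e _. rewrite Cmod_opp; auto. Qed.

Lemma negl_mul_mod (x y : R -> C) : negligibleC rho x -> moderateC rho y -> negligibleC rho (fun e => x e * y e)%C.
Proof.
  rewrite negC_iff, modC_iff, negC_iff. intros Hx [N HN] q.
  apply ev0_mono with (1 := ev0_and _ _ (Hx (q + N)%nat) (ev0_and _ _ HN ev0_rho)).
  intros e _ [A1 [A2 A3]].
  rewrite Cmod_mult. rewrite pow_add in A1. pose proof (rho_pow_pos N e A3). pose proof (rho_pow_pos q e A3).
  pose proof (Cmod_ge_0 (x e)). pose proof (Cmod_ge_0 (y e)).
  apply Rle_trans with (rho e ^ q * rho e ^ N * Cmod (y e)). apply Rmult_le_compat_r; auto.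
  rewrite Rmult_assoc. rewrite <- (Rmult_1_r (rho e ^ q)) at 2. apply Rmult_le_compat_l; lra.
Qed.

Lemma eqC_sym x y : eqC rho x y -> eqC rho y x.
Proof. intros H. apply negl_ext with (fun e => - (x e - y e))%C; [intros; ring|]. apply negl_opp; auto. Qed.

Lemma eqC_trans x y w : eqC rho x y -> eqC rho y w -> eqC rho x w.
Proof. intros H1 H2. apply negl_ext with (fun e => (x e - y e) + (y e - w e))%C; [intros; ring|]. apply negl_plus; auto. Qed.

Lemma eqC_mod x y : eqC rho x y -> moderateC rho x -> moderateC rho y.
Proof. intros H Hx. apply mod_ext with (fun e => x e + - (x e - y e))%C; [intros; ring|]. apply mod_plus; auto.
  apply negl_mod, negl_opp; auto. Qed.

Lemma mod_minus (x y : R -> C) : moderateC rho x -> moderateC rho y -> moderateC rho (fun e => x e - y e)%C.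
Proof. intros Hx Hy. apply mod_plus; auto. apply mod_opp; auto. Qed.

Lemma strong_sym a b : strong_eq rho a b -> strong_eq rho b a.
Proof. intros H q r. apply ev0_mono with (1 := H q r). intros e _ H1 n.
  replace (b n e - a n e)%C with (- (a n e - b n e))%C by ring. rewrite Cmod_opp. auto. Qed.

Lemma strong_trans a b c : strong_eq rho a b -> strong_eq rho b c -> strong_eq rho a c.
Proof.
  intros H1 H2 q r. apply ev0_mono with (1 := ev0_and _ _ (H1 q (S r)) (ev0_and _ _ (H2 q (S r)) ev0_rho)).
  intros e _ [A1 [A2 A3]] n. specialize (A1 n). specialize (A2 n).
  replace (a n e - c n e)%C with ((a n e - b n e) + (b n e - c n e))%C by ring.
  eapply Rle_trans; [apply Cmod_triangle|]. rewrite Nat.add_succ_r in A1, A2.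
  pose proof (rho_pow_S (n * q + r) e A3). pose proof (rho_pow_pos (n * q + r) e A3). lra.
Qed.

Lemma strong_refl a : strong_eq rho a a.
Proof. intros q r. apply ev0_mono with (1 := ev0_rho). intros e _ H n.
  replace (a n e - a n e)%C with (RtoC 0) by ring. rewrite Cmod_0. left; apply rho_pow_pos; auto. Qed.

End Nets.

Section Nets2.
Variable rho : R -> R.
Hypothesis Hg : is_gauge rho.

Lemma negl_ext_ev (x y : R -> C) : ev0 (fun e => x e = y e) -> negligibleC rho x -> negligibleC rho y.
Proof. rewrite !negC_iff. intros He H q. apply ev0_mono with (1 := ev0_and _ _ He (H q)). intros e _ [H1 H2]. rewrite <- H1; auto. Qed.

Lemma mod_ext_ev (x y : R -> C) : ev0 (fun e => x e = y e) -> moderateC rho x -> moderateC rho y.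
Proof. rewrite !(modC_iff rho Hg). intros He [N H]. exists N. apply ev0_mono with (1 := ev0_and _ _ He H). intros e _ [H1 H2]. rewrite <- H1; auto. Qed.

Lemma negl_le2 (x y1 y2 : R -> C) : ev0 (fun e => Cmod (x e) <= Cmod (y1 e) + Cmod (y2 e)) ->
  negligibleC rho y1 -> negligibleC rho y2 -> negligibleC rho x.
Proof.
  intros H H1 H2. pose proof (negC_iff rho (fun e => RtoC (Cmod (y1 e) + Cmod (y2 e)))) as Hi.
  apply negl_le with (fun e => RtoC (Cmod (y1 e) + Cmod (y2 e))).
  - apply ev0_mono with (1 := H). intros e _ Hx. rewrite Cmod_R, Rabs_pos_eq; auto.
    pose proof (Cmod_ge_0 (y1 e)); pose proof (Cmod_ge_0 (y2 e)); lra.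
  - apply Hi. rewrite negC_iff in H1, H2. pose proof (negl_plus rho Hg y1 y2) as _.
    intros q. apply ev0_mono with (1 := ev0_and _ _ (H1 (S q)) (ev0_and _ _ (H2 (S q)) (ev0_rho rho Hg))).
    intros e _ [A1 [A2 A3]]. rewrite Cmod_R, Rabs_pos_eq. pose proof (rho_pow_S rho q e A3). pose proof (rho_pow_pos rho q e A3). lra.
    pose proof (Cmod_ge_0 (y1 e)); pose proof (Cmod_ge_0 (y2 e)); lra.
Qed.

End Nets2.

Ltac fld := field; repeat match goal with |- _ /\ _ => split end; try (apply Rgt_not_eq); try lra.

Lemma n_half_pow n : INR n * (/2) ^ n <= 1.
Proof.
  induction n; [simpl; lra|]. rewrite S_INR. change ((/2)^(S n)) with (/2 * (/2)^n). assert ((/2)^n <= 1) by (apply pow_le1; lra).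
  assert (0 <= (/2)^n) by (apply pow_le; lra). nra.
Qed.

Lemma n_small_pow n x : 0 <= x <= /2 -> INR n * x ^ n <= 1.
Proof.
  intros Hx. eapply Rle_trans; [|apply (n_half_pow n)]. apply Rmult_le_compat_l; [apply pos_INR|].
  apply pow_incr; lra.
Qed.

Lemma cpow_mult (x y : C) n : Cpow (x * y) n = (Cpow x n * Cpow y n)%C.
Proof. induction n; simpl; [ring|rewrite IHn; ring]. Qed.

Lemma part2_point (al : nat -> C) (w w1 : C) (K : nat) (Bd rh : R) (Q R0 NK : nat) :
  0 < rh <= /4 ->
  (forall n, Cmod (al n) * rh ^ (n * Q + R0) <= 2) ->
  (forall m, (m <= K)%nat -> Cmod (SS (fun n => al n * Cpow w1 n)%C m) <= Bd) ->
  INR K * rh ^ NK <= 1 ->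
  Cmod (w - w1) <= / 2 * rh ^ (NK + (Q + 2)) ->
  Cmod (SS (fun n => al n * (Cpow w n - Cpow w1 n))%C K) * rh ^ (NK + (Q + 2) + R0) <= 4 * (Bd + 1) * Cmod (w - w1).
Proof.
  intros Hrh Hw HT HK Hd1. set (P := (Q + 2)%nat) in *. set (dl := Cmod (w - w1)) in *.
  assert (Hdl : 0 <= dl) by apply Cmod_ge_0.
  assert (HBd : 0 <= Bd) by (eapply Rle_trans; [apply Cmod_ge_0|apply (HT O); lia]).
  assert (HrP : 0 < rh ^ P) by (apply pow_pos'; lra).
  assert (HrNK : 0 < rh ^ NK) by (apply pow_pos'; lra).
  assert (HrR : 0 < rh ^ R0) by (apply pow_pos'; lra).
  assert (HrR1 : rh ^ R0 <= 1) by (apply pow_le1; lra).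
  assert (HrNK1 : rh ^ NK <= 1) by (apply pow_le1; lra).
  assert (HKp : 0 <= INR K) by apply pos_INR.
  rewrite !pow_add. rewrite pow_add in Hd1.
  assert (Hd2 : dl <= rh ^ P) by nra.
  destruct (Rlt_le_dec (Cmod w1) (rh ^ P)) as [Hsmall|Hlarge].
  -
    set (Mx := 2 * rh ^ P).
    assert (HMx : 0 < Mx) by (unfold Mx; lra).
    assert (Hw1 : Cmod w1 <= Mx) by (unfold Mx; lra).
    assert (Hww : Cmod w <= Mx).
    { replace w with ((w - w1) + w1)%C by ring. eapply Rle_trans; [apply Cmod_triangle|]. fold dl. unfold Mx; lra. }
    assert (Hterm : forall n, Cmod (al n * (Cpow w n - Cpow w1 n)) * (rh ^ P * rh ^ R0) <= dl).
    { intros n. rewrite Cmod_mult. pose proof (cpow_diff w w1 Mx n HMx Hww Hw1) as Hd. fold dl in Hd.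
      specialize (Hw n). pose proof (Cmod_ge_0 (al n)). pose proof (Cmod_ge_0 (Cpow w n - Cpow w1 n)).
      assert (0 < rh ^ (n * Q)) by (apply pow_pos'; lra).
      rewrite pow_add in Hw.
      assert (E1 : Mx ^ n = 2 ^ n * rh ^ (n * Q) * (rh * rh) ^ n).
      { unfold Mx. rewrite Rpow_mult_distr. rewrite Rmult_assoc. f_equal.
        replace (rh * rh) with (rh ^ 2) by ring. rewrite <- !pow_mult, <- pow_add. f_equal. unfold P. lia. }
      set (A := Cmod (al n) * (rh ^ (n * Q) * rh ^ R0)) in Hw.
      assert (0 <= (rh * rh) ^ n) by (apply pow_le; nra).
      assert (Hx : INR n * (2 * (rh * rh)) ^ n <= 1) by (apply n_small_pow; nra).
      apply Rle_trans with (Cmod (al n) * (INR n * dl * Mx ^ n / Mx) * (rh ^ P * rh ^ R0)).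
      { apply Rmult_le_compat_r; [apply Rmult_le_pos; lra|]. apply Rmult_le_compat_l; auto. }
      replace (Cmod (al n) * (INR n * dl * Mx ^ n / Mx) * (rh ^ P * rh ^ R0)) with
        (A * (INR n * (2 * (rh * rh)) ^ n) * dl / 2).
      2:{ unfold A. rewrite E1. rewrite Rpow_mult_distr. unfold Mx. fld. }
      assert (0 <= A) by (unfold A; apply Rmult_le_pos; auto; apply Rmult_le_pos; lra).
      assert (0 <= INR n * (2 * (rh * rh)) ^ n) by (apply Rmult_le_pos; [apply pos_INR|apply pow_le; nra]).
      assert (A * (INR n * (2 * (rh * rh)) ^ n) <= 2 * 1) by (apply Rmult_le_compat; auto).
      unfold Rdiv. nra. }
    assert (Hsum : Cmod (SS (fun n => al n * (Cpow w n - Cpow w1 n))%C K) <= INR (S K) * (dl / (rh ^ P * rh ^ R0))).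
    { rewrite <- RS_const_le. apply SS_bound. intros n _. specialize (Hterm n).
      apply Rmult_le_reg_r with (rh ^ P * rh ^ R0); [apply Rmult_lt_0_compat; auto|].
      unfold Rdiv. rewrite Rmult_assoc, Rinv_l, Rmult_1_r; [auto|]. apply Rgt_not_eq, Rmult_lt_0_compat; auto. }
    apply Rle_trans with (INR (S K) * (dl / (rh ^ P * rh ^ R0)) * (rh ^ NK * rh ^ P * rh ^ R0)).
    { apply Rmult_le_compat_r; auto. apply Rmult_le_pos; [apply Rmult_le_pos|]; lra. }
    replace (INR (S K) * (dl / (rh ^ P * rh ^ R0)) * (rh ^ NK * rh ^ P * rh ^ R0)) with ((INR K * rh ^ NK + rh ^ NK) * dl)
      by (rewrite S_INR; fld).
    nra.
  -
    assert (Hw1 : Cmod w1 <> 0) by lra.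
    assert (Hw1' : w1 <> RtoC 0) by (intros E; apply Hw1; rewrite E; apply Cmod_0).
    set (eta := ((w - w1) / w1)%C).
    assert (Heta : Cmod eta = dl / Cmod w1) by (unfold eta, dl; rewrite Cmod_div; auto).
    assert (Hwe : w = (w1 * (1 + eta))%C) by (unfold eta; field; auto).
    assert (Heta2 : Cmod eta <= dl / rh ^ P).
    { rewrite Heta. unfold Rdiv. apply Rmult_le_compat_l; auto. apply Rinv_le_contravar; auto. }
    assert (Hcond : INR K * Cmod eta <= /2).
    { apply Rle_trans with (INR K * (dl / rh ^ P)). apply Rmult_le_compat_l; auto.
      apply Rle_trans with (INR K * (/2 * rh ^ NK)).
      - apply Rmult_le_compat_l; auto. apply Rmult_le_reg_r with (rh ^ P); auto.
        unfold Rdiv. rewrite Rmult_assoc, Rinv_l by lra. lra.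
      - nra. }
    rewrite (SS_ext _ (fun n => (al n * Cpow w1 n) * (Cpow (1 + eta) n - 1))%C).
    2:{ intros n _. rewrite Hwe, cpow_mult. ring. }
    pose proof (abel (fun n => al n * Cpow w1 n)%C eta K Bd HT Hcond) as HA.
    assert (0 <= Cmod eta) by apply Cmod_ge_0.
    apply Rle_trans with (4 * Bd * INR K * Cmod eta * (rh ^ NK * rh ^ P * rh ^ R0)).
    { apply Rmult_le_compat_r; auto. apply Rmult_le_pos; [apply Rmult_le_pos|]; lra. }
    assert (Cmod eta * rh ^ P <= dl).
    { apply Rmult_le_reg_r with (/ rh ^ P). apply Rinv_0_lt_compat; auto.
      rewrite Rmult_assoc, Rinv_r, Rmult_1_r by lra. auto. }
    replace (4 * Bd * INR K * Cmod eta * (rh ^ NK * rh ^ P * rh ^ R0)) with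
      (4 * Bd * (INR K * rh ^ NK) * (Cmod eta * rh ^ P) * rh ^ R0) by ring.
    assert (0 <= 4 * Bd * (INR K * rh ^ NK)) by (apply Rmult_le_pos; [lra|nra]).
    assert (4 * Bd * (INR K * rh ^ NK) <= 4 * Bd) by nra.
    assert (0 <= Cmod eta * rh ^ P) by nra.
    assert (4 * Bd * (INR K * rh ^ NK) * (Cmod eta * rh ^ P) <= 4 * Bd * dl) by (apply Rmult_le_compat; auto; lra).
    assert (0 <= 4 * Bd * (INR K * rh ^ NK) * (Cmod eta * rh ^ P)) by (apply Rmult_le_pos; auto).
    nra.
Qed.

Lemma quarter_pow n : (INR n + 1) * (/4) ^ n <= 1.
Proof.
  induction n; [simpl; lra|]. rewrite S_INR. change ((/4)^(S n)) with (/4 * (/4)^n).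
  assert ((/4)^n <= 1) by (apply pow_le1; lra). assert (0 <= (/4)^n) by (apply pow_le; lra). nra.
Qed.

Section Main.
Variable rho : R -> R.
Variables a a1 a2 b : nat -> R -> C.
Variables z c z1 c1 z2 c2 y d : R -> C.
Hypothesis Hg : is_gauge rho.
Hypothesis Hwm : weakly_moderate rho a.
Hypothesis Hmz : moderateC rho z.
Hypothesis Hmc : moderateC rho c.
Hypothesis Hs1 : strong_eq rho a a1.
Hypothesis Hs2 : strong_eq rho a a2.
Hypothesis Hsb : strong_eq rho a b.
Hypothesis Hz1 : eqC rho z z1.
Hypothesis Hc1 : eqC rho c c1.
Hypothesis Hz2 : eqC rho z z2.
Hypothesis Hc2 : eqC rho c c2.
Hypothesis Hy : eqC rho z y.
Hypothesis Hd : eqC rho c d.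
Hypothesis Hrad : ltRinf rho (fun e => Cmod (z2 e - c2 e)%C) (rad_net a2).
Hypothesis HA1 : condA rho a1 z1 c1.
Hypothesis HB1 : condB rho a1 z1 c1.
Hypothesis HC1 : condC rho a1 z1 c1.

Let u := fun e => (y e - d e)%C.
Let u1 := fun e => (z1 e - c1 e)%C.
Let v := fun e => (z2 e - c2 e)%C.
Let del := fun e => (u e - u1 e)%C.
Let al1 := fun e n => a1 n e.

Lemma L_del : negligibleC rho del.
Proof.
  apply negl_ext with (fun e => - (z e - y e) + (z e - z1 e) + (c e - d e) - (c e - c1 e))%C.
  { intros e. unfold del, u, u1. ring. }
  apply negl_minus; auto. apply negl_plus; auto. apply negl_plus; auto. apply negl_opp; auto.
Qed.

Lemma L_u1v : negligibleC rho (fun e => u1 e - v e)%C.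
Proof.
  apply negl_ext with (fun e => - (z e - z1 e) + (z e - z2 e) + (c e - c1 e) - (c e - c2 e))%C.
  { intros e. unfold v, u1. ring. }
  apply negl_minus; auto. apply negl_plus; auto. apply negl_plus; auto. apply negl_opp; auto.
Qed.

Lemma M_v : moderateC rho v.
Proof. apply mod_minus; auto; eapply eqC_mod; eauto. Qed.
Lemma M_u : moderateC rho u.
Proof. apply mod_minus; auto; eapply eqC_mod; eauto. Qed.
Lemma M_u1 : moderateC rho u1.
Proof. apply mod_minus; auto; eapply eqC_mod; eauto. Qed.

Lemma S_b1 : strong_eq rho b a1.
Proof. eapply strong_trans; eauto. apply strong_sym; auto. Qed.
Lemma S_12 : strong_eq rho a1 a2.
Proof. eapply strong_trans; eauto. apply strong_sym; auto. Qed.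

Lemma W_a1 : exists Q R0, ev0 (fun e => forall n, Cmod (a1 n e) * rho e ^ (n * Q + R0) <= 2).
Proof.
  destruct Hwm as [Q [R0 HW]]. exists Q, R0.
  apply ev0_mono with (1 := ev0_and _ _ HW (ev0_and _ _ (Hs1 0%nat 0%nat) (ev0_rho rho Hg))).
  intros e _ [A1 [A2 A3]] n. specialize (A1 n). specialize (A2 n). simpl in A2.
  assert (Hp : 0 < rho e ^ (n * Q + R0)) by (apply rho_pow_pos; auto).
  assert (Hp1 : rho e ^ (n * Q + R0) <= 1) by (apply pow_le1; lra).
  replace (n * 0 + 0)%nat with 0%nat in A2 by lia. simpl in A2.
  assert (Cmod (a1 n e) <= Cmod (a n e) + 1).
  { replace (a1 n e) with (a n e - (a n e - a1 n e))%C by ring. eapply Rle_trans; [apply Cmod_triangle|]. rewrite Cmod_opp. lra. }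
  assert (Cmod (a n e) * rho e ^ (n * Q + R0) <= 1).
  { apply Rmult_le_reg_r with (/ rho e ^ (n * Q + R0)). apply Rinv_0_lt_compat; auto.
    rewrite Rmult_assoc, Rinv_r, Rmult_1_r, Rmult_1_l by lra. auto. }
  nra.
Qed.

Lemma diff_small (x : R -> C) : moderateC rho x -> forall q,
  ev0 (fun e => forall n, Cmod (b n e - a1 n e) * ((Cmod (x e) + 1) ^ n * (INR n + 1)) <= rho e ^ q * (/2) ^ n).
Proof.
  intros Hx q. apply (modC_iff rho Hg) in Hx. destruct Hx as [N HN].
  apply ev0_mono with (1 := ev0_and _ _ HN (ev0_and _ _ (S_b1 (N + 2)%nat q) (ev0_rho rho Hg))).
  intros e _ [A1 [A2 A3]] n. specialize (A2 n).
  set (X := Cmod (x e)). assert (HX : 0 <= X) by apply Cmod_ge_0.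
  assert (HN1 : rho e ^ N <= 1) by (apply pow_le1; lra).
  assert (HXp : (X + 1) * rho e ^ N <= 2) by (unfold X; lra).
  assert (E1 : rho e ^ (n * (N + 2) + q) = rho e ^ q * (rho e ^ N * (rho e * rho e)) ^ n).
  { rewrite pow_add, Rmult_comm. f_equal. rewrite Nat.mul_comm, pow_mult. f_equal. rewrite pow_add. simpl. ring. }
  rewrite E1 in A2.
  assert (Hq : 0 < rho e ^ q) by (apply rho_pow_pos; auto).
  pose proof (Cmod_ge_0 (b n e - a1 n e)).
  assert (0 <= (X + 1) ^ n) by (apply pow_le; lra).
  assert (0 <= INR n + 1) by (pose proof (pos_INR n); lra).
  apply Rle_trans with (rho e ^ q * (rho e ^ N * (rho e * rho e)) ^ n * ((X + 1) ^ n * (INR n + 1))).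
  { apply Rmult_le_compat_r; auto. apply Rmult_le_pos; auto. }
  rewrite <- !Rmult_assoc. rewrite (Rmult_assoc (rho e ^ q)). rewrite <- Rpow_mult_distr.
  rewrite Rmult_assoc. apply Rmult_le_compat_l; [lra|].
  assert (Hb : (rho e ^ N * (rho e * rho e) * (X + 1)) <= / 8).
  { replace (rho e ^ N * (rho e * rho e) * (X + 1)) with ((X + 1) * rho e ^ N * (rho e * rho e)) by ring.
    assert (rho e * rho e <= /16) by nra. assert (0 <= rho e * rho e) by nra. nra. }
  assert (0 <= rho e ^ N * (rho e * rho e) * (X + 1)) by (apply Rmult_le_pos; [apply Rmult_le_pos; [apply pow_le|]|]; nra).
  replace (rho e ^ N * rho e * rho e * (X + 1)) with (rho e ^ N * (rho e * rho e) * (X + 1)) by ring.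
  apply Rle_trans with ((/8) ^ n * (INR n + 1)).
  { apply Rmult_le_compat_r; [lra|]. apply pow_incr; split; [|exact Hb]. lra. }
  replace ((/8) ^ n) with ((/2) ^ n * (/4) ^ n) by (rewrite <- Rpow_mult_distr; f_equal; lra).
  pose proof (quarter_pow n). assert (0 <= (/2)^n) by (apply pow_le; lra). nra.
Qed.

Lemma diff_series (x : R -> C) : moderateC rho x -> forall q,
  ev0 (fun e => (forall N, Cmod (SS (fun n => (b n e - a1 n e) * Cpow (x e) n)%C N) <= 2 * rho e ^ q) /\
                 Cmod (cs (fun n => (b n e - a1 n e) * Cpow (x e) n)%C) <= 2 * rho e ^ q /\
                 series_to (fun n => (b n e - a1 n e) * Cpow (x e) n)%C (cs (fun n => (b n e - a1 n e) * Cpow (x e) n)%C)).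
Proof.
  intros Hx q. apply ev0_mono with (1 := ev0_and _ _ (diff_small x Hx q) (ev0_rho rho Hg)).
  intros e _ [A1 A2].
  assert (Ht : forall n, Cmod ((b n e - a1 n e) * Cpow (x e) n)%C <= rho e ^ q * (/2) ^ n).
  { intros n. specialize (A1 n). rewrite Cmod_mult, Cmod_pow. eapply Rle_trans; [|exact A1].
    apply Rmult_le_compat_l; [apply Cmod_ge_0|]. pose proof (pos_INR n).
    assert (Cmod (x e) ^ n <= (Cmod (x e) + 1) ^ n) by (apply pow_incr; pose proof (Cmod_ge_0 (x e)); lra).
    assert (0 <= Cmod (x e) ^ n) by (apply pow_le, Cmod_ge_0). nra. }
  assert (HP : forall N, Cmod (SS (fun n => (b n e - a1 n e) * Cpow (x e) n)%C N) <= 2 * rho e ^ q).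
  { intros N. eapply Rle_trans; [apply SS_bound with (b := fun n => rho e ^ q * (/2) ^ n); intros; apply Ht|].
    apply RS_geom_le. left; apply rho_pow_pos; auto. }
  destruct (series_to_of_major (fun n => (b n e - a1 n e) * Cpow (x e) n)%C (fun n => rho e ^ q * (/2) ^ n)) as [l Hl].
  { apply Ht. }
  { apply ex_series_ext with (fun n => (/2) ^ n * rho e ^ q); [intros; apply Rmult_comm|].
    apply ex_series_scal_r. apply ex_series_geom. rewrite Rabs_pos_eq; lra. }
  rewrite (cs_spec _ l Hl). repeat split; auto. eapply series_to_bound; eauto.
Qed.


Lemma RAD : exists m, ev0 (fun e => ex_series (pm (al1 e) (Cmod (v e) + rho e ^ m / 2))).
Proof.
  destruct Hrad as [m Hm]. destruct ((proj1 (modC_iff rho Hg v)) M_v) as [Nv HNv].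
  set (qq := (m + Nv + Nv + 3)%nat).
  exists m. apply ev0_mono with (1 := ev0_and _ _ Hm (ev0_and _ _ HNv (ev0_and _ _ (S_12 qq 0%nat) (ev0_rho rho Hg)))).
  intros e _ [A1 [A2 [A3 A4]]].
  set (V := Cmod (v e)). set (s := rho e ^ m).
  assert (HV : 0 <= V) by apply Cmod_ge_0. assert (Hs : 0 < s) by (apply rho_pow_pos; auto).
  assert (Hs1' : s <= 1) by (apply pow_le1; lra).
  assert (Hka : 0 <= rho e ^ qq) by (left; apply rho_pow_pos; auto).
  destruct (rad_point (fun n => a2 n e) (al1 e) V s (rho e ^ qq)) as [n0 Hn0]; auto.
  - intros n _. unfold al1. specialize (A3 n).
    replace (a1 n e) with (a2 n e + (a1 n e - a2 n e))%C by ring.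
    eapply Rle_trans; [apply Cmod_triangle|]. apply Rplus_le_compat_l.
    eapply Rle_trans; [exact A3|]. rewrite Nat.add_0_r, Nat.mul_comm, pow_mult. lra.
  - assert (HNv1 : rho e ^ Nv <= 1) by (apply pow_le1; lra).
    assert (H2 : (V + s) * rho e ^ Nv <= 2) by (unfold V; nra).
    assert (0 <= (V + s) * rho e ^ Nv) by (apply Rmult_le_pos; [lra|left; apply rho_pow_pos; auto]).
    assert (E1 : rho e ^ qq * (V + s) * (V + s) = s * (rho e ^ 3) * (((V + s) * rho e ^ Nv) * ((V + s) * rho e ^ Nv))).
    { unfold qq, s. rewrite !pow_add. ring. }
    rewrite E1. assert (rho e ^ 3 <= /64) by (simpl; assert (0 < rho e) by lra; nra).
    assert (0 < rho e ^ 3) by (apply rho_pow_pos; auto).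
    assert (((V + s) * rho e ^ Nv) * ((V + s) * rho e ^ Nv) <= 4) by nra.
    assert (rho e ^ 3 * (((V + s) * rho e ^ Nv) * ((V + s) * rho e ^ Nv)) <= /64 * 4).
    { apply Rmult_le_compat; auto; try lra. apply Rmult_le_pos; auto. }
    assert (s * (rho e ^ 3 * ((V + s) * rho e ^ Nv * ((V + s) * rho e ^ Nv))) <= s * (/64 * 4)) by (apply Rmult_le_compat_l; lra).
    lra.
  - apply maj_of_root with (r3 := V + 3 * s / 4). lra. exists n0. auto.
Qed.

Lemma FDIFF : exists m, ev0 (fun e => ex_series (pm (al1 e) (Cmod (v e) + rho e ^ m / 2)) /\
     Cmod (u e) <= Cmod (v e) + rho e ^ m / 2 /\ Cmod (u1 e) <= Cmod (v e) + rho e ^ m / 2 /\ 0 < rho e ^ m) /\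
   negligibleC rho (fun e => Fs (al1 e) (u e) - Fs (al1 e) (u1 e))%C.
Proof.
  destruct RAD as [m Hm]. exists m.
  pose proof ((proj1 (negC_iff rho _)) L_del (m + 3)%nat) as Hdl.
  pose proof ((proj1 (negC_iff rho _)) L_u1v (m + 3)%nat) as Huv.
  set (Reg := fun e => ex_series (pm (al1 e) (Cmod (v e) + rho e ^ m / 2)) /\
     Cmod (u1 e - v e) <= rho e ^ (m + 3) /\ Cmod (del e) <= rho e ^ (m + 3) /\ 0 < rho e <= /4).
  assert (HReg : ev0 Reg) by (apply ev0_and; auto; apply ev0_and; auto; apply ev0_and; auto; apply ev0_rho; auto).
  assert (Hseg : forall e, Reg e -> forall t, 0 <= t <= 1 -> Cmod (u1 e + RtoC t * del e) <= Cmod (v e) + rho e ^ m / 2).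
  { intros e [R1 [R2 [R3 R4]]] t Ht.
    replace (u1 e + RtoC t * del e)%C with (v e + (u1 e - v e) + RtoC t * del e)%C by ring.
    eapply Rle_trans; [apply Cmod_triangle|]. eapply Rle_trans; [apply Rplus_le_compat_r; apply Cmod_triangle|].
    rewrite Cmod_mult, Cmod_R, Rabs_pos_eq by lra.
    assert (rho e ^ (m + 3) <= rho e ^ m / 8).
    { rewrite pow_add. assert (0 < rho e ^ m) by (apply rho_pow_pos; auto). simpl.
      assert (rho e * (rho e * (rho e * 1)) <= /64) by (assert (0 < rho e) by lra; nra). nra. }
    pose proof (Cmod_ge_0 (del e)). nra. }
  assert (Hu : forall e, u e = (u1 e + RtoC 1 * del e)%C) by (intros; unfold del; ring).
  split.
  { apply ev0_mono with (1 := HReg). intros e _ HR. pose proof (Hseg e HR) as HS.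
    destruct HR as [R1 [R2 [R3 R4]]]. repeat split; auto.
    - rewrite Hu. apply HS; lra.
    - replace (u1 e) with (u1 e + RtoC 0 * del e)%C by ring. apply HS; lra.
    - apply rho_pow_pos; auto. }
  set (Pt := fun e t => 0 <= t <= 1 /\ Cmod (Fs (al1 e) (u1 e + del e) - Fs (al1 e) (u1 e)) <=
                Cmod (del e) * (Cmod (Gs (al1 e) (u1 e + RtoC t * del e)) + 1)).
  set (T := fun e => epsilon (inhabits 0) (Pt e)).
  assert (HT : forall e, Reg e -> Pt e (T e)).
  { intros e HR. unfold T. apply epsilon_spec. pose proof (Hseg e HR) as HS. destruct HR as [R1 [R2 [R3 R4]]].
    assert (Hr : 0 < Cmod (v e) + rho e ^ m / 2) by (pose proof (Cmod_ge_0 (v e)); assert (0 < rho e ^ m) by (apply rho_pow_pos; auto); lra).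
    destruct (RS_le_series _ (fun n => pm_nonneg (al1 e) _ n (Rlt_le _ _ Hr)) R1) as [B HB].
    apply (grid (al1 e) _ B Hr R1 HB (u1 e) (del e)). auto. }
  set (zh := fun e => (c1 e + u1 e + RtoC (T e) * del e)%C).
  assert (Hzh : eqC rho zh z1).
  { unfold eqC. apply negl_le with del; [|apply L_del].
    apply ev0_mono with (1 := HReg). intros e _ HR. destruct (HT e HR) as [[Ht0 Ht1] _].
    replace (zh e - z1 e)%C with (RtoC (T e) * del e)%C by (unfold zh, u1; ring).
    rewrite Cmod_mult, Cmod_R, Rabs_pos_eq by lra. pose proof (Cmod_ge_0 (del e)). nra. }
  destruct (HC1 zh Hzh) as [dd [Hdd Hser]].
  apply negl_le2 with (fun e => del e * dd e)%C del; auto.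
  - apply ev0_mono with (1 := ev0_and _ _ HReg Hser). intros e _ [HR HS].
    destruct (HT e HR) as [_ Hb].
    assert (Gs (al1 e) (u1 e + RtoC (T e) * del e) = dd e).
    { unfold Gs. apply cs_spec. apply series_to_ext with (2 := HS). intros n. unfold gt_, al1.
      replace (zh e - c1 e)%C with (u1 e + RtoC (T e) * del e)%C by (unfold zh; ring). reflexivity. }
    rewrite H in Hb. replace (u e) with (u1 e + del e)%C by (unfold del; ring).
    rewrite Cmod_mult. pose proof (Cmod_ge_0 (del e)). nra.
  - apply negl_mul_mod; auto. apply L_del.
  - apply L_del.
Qed.

Lemma coreD K : hypnat rho K ->
  negligibleC rho (fun e => hsum (pterms b y d) (fun _ => 0%nat) K e - hsum (pterms a1 z1 c1) (fun _ => 0%nat) K e)%C.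
Proof.
  intros HK.
  apply negl_ext with (fun e => SS (fun n => (b n e - a1 n e) * Cpow (u e) n)%C (K e) +
                                SS (fun n => a1 n e * (Cpow (u e) n - Cpow (u1 e) n))%C (K e))%C.
  { intros e. change (hsum (pterms b y d) (fun _ => 0%nat) K e) with (SS (fun n => b n e * Cpow (u e) n)%C (K e)).
    change (hsum (pterms a1 z1 c1) (fun _ => 0%nat) K e) with (SS (fun n => a1 n e * Cpow (u1 e) n)%C (K e)).
    rewrite <- SS_plus, <- SS_minus. apply SS_ext. intros; ring. }
  apply negl_plus; auto.
  - apply negC_iff; auto. intros q. apply ev0_mono with (1 := ev0_and _ _ (diff_series u M_u (S q)) (ev0_rho rho Hg)).
    intros e _ [[A1 _] A2]. specialize (A1 (K e)). pose proof (rho_pow_S rho q e A2). pose proof (rho_pow_pos rho q e A2). lra.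
  - destruct W_a1 as [Q [R0 HW]].
    apply (modR_iff rho Hg) in HK. destruct HK as [NK HNK].
    set (Tm := fun e m => SS (fun n => a1 n e * Cpow (u1 e) n)%C m).
    set (Km := fun e => amax (fun m => Cmod (Tm e m)) (K e)).
    assert (HKm : hypnat rho Km).
    { apply (modR_iff rho Hg). exists NK. apply ev0_mono with (1 := ev0_and _ _ HNK (ev0_rho rho Hg)).
      intros e _ [A1 A2]. rewrite Rabs_pos_eq in * by apply pos_INR. eapply Rle_trans; [|exact A1].
      apply Rmult_le_compat_r; [left; apply rho_pow_pos; auto|]. apply le_INR. apply amax_le. }
    pose proof (HA1 Km HKm) as HAm. apply (modC_iff rho Hg) in HAm. destruct HAm as [NB HNB].
    pose proof ((proj1 (negC_iff rho del)) L_del (NK + (Q + 2) + 1)%nat) as Hdl.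
    apply negl_from with (E := (NK + (Q + 2) + R0 + NB)%nat) (d := del); auto; [|apply L_del].
    apply ev0_mono with (1 := ev0_and _ _ HW (ev0_and _ _ HNK (ev0_and _ _ HNB (ev0_and _ _ Hdl (ev0_rho rho Hg))))).
    intros e _ [A1 [A2 [A3 [A4 A5]]]].
    set (Bd := Cmod (Tm e (Km e))).
    change (Cmod (hsum (pterms a1 z1 c1) (fun _ => 0%nat) Km e) * rho e ^ NB <= 1) with (Bd * rho e ^ NB <= 1) in A3.
    rewrite Rabs_pos_eq in A2 by apply pos_INR.
    assert (Hd1 : Cmod (u e - u1 e) <= / 2 * rho e ^ (NK + (Q + 2))).
    { change (Cmod (del e) <= / 2 * rho e ^ (NK + (Q + 2))). rewrite pow_add in A4 |- *. rewrite pow_add in A4.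
      assert (0 < rho e ^ NK * rho e ^ (Q + 2)) by (apply Rmult_lt_0_compat; apply rho_pow_pos; auto).
      simpl in A4. nra. }
    pose proof (part2_point (al1 e) (u e) (u1 e) (K e) Bd (rho e) Q R0 NK A5 A1) as HP.
    assert (HT : forall m, (m <= K e)%nat -> Cmod (SS (fun n => al1 e n * Cpow (u1 e) n)%C m) <= Bd).
    { intros m Hm. apply (amax_ge (fun m => Cmod (Tm e m)) (K e) m Hm). }
    specialize (HP HT A2 Hd1). fold del in HP. change (fun n => al1 e n * (Cpow (u e) n - Cpow (u1 e) n))%C with
      (fun n => a1 n e * (Cpow (u e) n - Cpow (u1 e) n))%C in HP.
    set (X := Cmod (SS (fun n => a1 n e * (Cpow (u e) n - Cpow (u1 e) n))%C (K e))) in *.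
    assert (0 <= X) by apply Cmod_ge_0. assert (0 <= Bd) by apply Cmod_ge_0.
    assert (0 < rho e ^ NB) by (apply rho_pow_pos; auto). assert (rho e ^ NB <= 1) by (apply pow_le1; lra).
    assert (0 <= Cmod (del e)) by apply Cmod_ge_0.
    rewrite (pow_add (rho e) (NK + (Q + 2) + R0) NB).
    apply Rle_trans with (4 * (Bd + 1) * Cmod (del e) * rho e ^ NB).
    { rewrite <- Rmult_assoc. apply Rmult_le_compat_r; [lra|]. exact HP. }
    assert ((Bd + 1) * rho e ^ NB <= 2) by nra. nra.
Qed.

Lemma tA : condA rho b y d.
Proof.
  intros N HN. apply (mod_ext rho Hg) with (fun e => hsum (pterms a1 z1 c1) (fun _ => 0%nat) N e +
     (hsum (pterms b y d) (fun _ => 0%nat) N e - hsum (pterms a1 z1 c1) (fun _ => 0%nat) N e))%C.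
  { intros; ring. }
  apply (mod_plus rho Hg); auto. apply (negl_mod rho Hg); auto. apply coreD; auto.
Qed.

Lemma tC : condC rho b y d.
Proof.
  intros zh' Hzh'.
  set (x := fun e => (zh' e - d e)%C).
  set (zhh := fun e => (x e + c1 e)%C).
  assert (Hzhh : eqC rho zhh z1).
  { unfold eqC. apply (negl_ext rho) with (fun e => (zh' e - y e) - (z e - y e) + (z e - z1 e) + (c e - d e) - (c e - c1 e))%C.
    { intros e. unfold zhh, x. ring. }
    apply (negl_minus rho Hg); auto. apply (negl_plus rho Hg); auto. apply (negl_plus rho Hg); auto. apply (negl_minus rho Hg); auto. }
  destruct (HC1 zhh Hzhh) as [dd1 [Hdd1 Hser1]].
  assert (Mx : moderateC rho x).
  { apply (mod_minus rho Hg); auto. apply (eqC_mod rho Hg) with y; [apply (eqC_sym rho); auto|]. apply (eqC_mod rho Hg) with z; auto.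
    apply (eqC_mod rho Hg) with c; auto. }
  set (g2 := fun e n => (RtoC (INR n) * (b n e - a1 n e) * Cpow (x e) (n - 1))%C).
  set (E2 := fun e => cs (g2 e)).
  assert (HE2 : ev0 (fun e => series_to (g2 e) (E2 e) /\ Cmod (E2 e) <= 2)).
  { apply ev0_mono with (1 := diff_small x Mx 0%nat). intros e _ A1.
    assert (Ht : forall n, Cmod (g2 e n) <= 1 * (/2) ^ n).
    { intros n. specialize (A1 n). simpl in A1. rewrite Rmult_1_l in A1. rewrite Rmult_1_l. unfold g2.
      rewrite !Cmod_mult, Cmod_pow, Cmod_R, Rabs_pos_eq by apply pos_INR. eapply Rle_trans; [|exact A1].
      pose proof (pos_INR n). pose proof (Cmod_ge_0 (b n e - a1 n e)). pose proof (Cmod_ge_0 (x e)).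
      assert (Cmod (x e) ^ (n - 1) <= (Cmod (x e) + 1) ^ n).
      { apply Rle_trans with ((Cmod (x e) + 1) ^ (n - 1)). apply pow_incr; lra. apply Rle_pow; [lra|lia]. }
      assert (0 <= Cmod (x e) ^ (n - 1)) by (apply pow_le; lra).
      replace (INR n * Cmod (b n e - a1 n e) * Cmod (x e) ^ (n - 1)) with (Cmod (b n e - a1 n e) * (Cmod (x e) ^ (n - 1) * INR n)) by ring.
      apply Rmult_le_compat_l; auto. apply Rmult_le_compat; auto; lra. }
    destruct (series_to_of_major (g2 e) (fun n => 1 * (/2) ^ n)) as [l Hl]; auto.
    { apply ex_series_ext with (fun n => (/2) ^ n * 1); [intros; apply Rmult_comm|].
      apply ex_series_scal_r. apply ex_series_geom. rewrite Rabs_pos_eq; lra. }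
    unfold E2. rewrite (cs_spec _ l Hl). split; auto. apply (series_to_bound _ _ _) with (2 := Hl).
    intros N. replace 2 with (2 * 1) by ring. eapply Rle_trans; [apply SS_bound with (b := fun n => 1 * (/2) ^ n); intros; apply Ht|].
    apply RS_geom_le; lra. }
  exists (fun e => dd1 e + E2 e)%C. split.
  - apply (mod_plus rho Hg); auto. apply (modC_iff rho Hg). exists 1%nat.
    apply ev0_mono with (1 := ev0_and _ _ HE2 (ev0_rho rho Hg)). intros e _ [[_ A1] A2]. simpl. nra.
  - apply ev0_mono with (1 := ev0_and _ _ HE2 Hser1). intros e _ [[A1 _] A2].
    apply series_to_ext with (fun n => (RtoC (INR n) * a1 n e * Cpow (zhh e - c1 e) (n - 1)) + g2 e n)%C.
    { intros n. unfold g2. replace (zhh e - c1 e)%C with (x e) by (unfold zhh; ring). unfold x. ring. }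
    apply series_to_plus; auto.
Qed.

Lemma tB : condB rho b y d.
Proof.
  destruct FDIFF as [m [Hreg Hneg]].
  destruct HB1 as [l1 [Hl1 [Hser1 Hhyp1]]].
  set (E := fun e => cs (fun n => (b n e - a1 n e) * Cpow (u e) n)%C).
  set (l := fun e => (Fs (al1 e) (u e) + E e)%C).
  assert (HEn : negligibleC rho E).
  { apply negC_iff. intros q. apply ev0_mono with (1 := ev0_and _ _ (diff_series u M_u (S q)) (ev0_rho rho Hg)).
    intros e _ [[_ [A1 _]] A2]. fold (E e) in A1. pose proof (rho_pow_S rho q e A2). pose proof (rho_pow_pos rho q e A2). lra. }
  assert (Heq : ev0 (fun e => (l1 e + ((Fs (al1 e) (u e) - Fs (al1 e) (u1 e)) + E e))%C = l e)).
  { apply ev0_mono with (1 := ev0_and _ _ Hreg Hser1). intros e _ [[R1 [R2 [R3 R4]]] S1].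
    assert (Hr : 0 < Cmod (v e) + rho e ^ m / 2) by (pose proof (Cmod_ge_0 (v e)); lra).
    pose proof (Fs_spec (al1 e) _ Hr R1 (u1 e) R3) as HF.
    assert (Fs (al1 e) (u1 e) = l1 e).
    { apply (series_to_unique _ _ _ HF). apply series_to_ext with (2 := S1). intros; reflexivity. }
    unfold l. rewrite H. ring. }
  assert (Hln : negligibleC rho (fun e => l e - l1 e)%C).
  { apply (negl_ext_ev rho) with (fun e => (Fs (al1 e) (u e) - Fs (al1 e) (u1 e)) + E e)%C.
    - apply ev0_mono with (1 := Heq). intros e _ H. rewrite <- H. ring.
    - apply (negl_plus rho Hg); auto. }
  exists l. split; [|split].
  - apply (mod_ext_ev rho Hg) with (1 := Heq). apply (mod_plus rho Hg); auto. apply (negl_mod rho Hg). apply (negl_plus rho Hg); auto.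
  - apply ev0_mono with (1 := ev0_and _ _ Hreg (diff_series u M_u 0%nat)). intros e _ [[R1 [R2 [R3 R4]]] [_ [_ S2]]].
    assert (Hr : 0 < Cmod (v e) + rho e ^ m / 2) by (pose proof (Cmod_ge_0 (v e)); lra).
    pose proof (Fs_spec (al1 e) _ Hr R1 (u e) R2) as HF.
    apply series_to_ext with (fun n => (al1 e n * Cpow (u e) n) + ((b n e - a1 n e) * Cpow (u e) n))%C.
    { intros n. unfold pterms, al1. fold (u e). ring. }
    apply series_to_plus; auto.
  - intros q. destruct (Hhyp1 (S q)) as [M [HM HMn]]. exists M. split; auto.
    intros n Hn Hle. destruct (HMn n Hn Hle) as [mm Hmm]. exists (S mm).
    pose proof ((proj1 (negC_iff rho _)) (coreD n Hn) (mm + 2)%nat) as HD.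
    pose proof ((proj1 (negC_iff rho _)) Hln (mm + 2)%nat) as HL.
    apply ev0_mono with (1 := ev0_and _ _ Hmm (ev0_and _ _ HD (ev0_and _ _ HL (ev0_rho rho Hg)))).
    intros e _ [A1 [A2 [A3 A4]]]. simpl in A1 |- *.
    set (Sb := hsum (pterms b y d) (fun _ => 0%nat) n e) in *.
    set (Sa := hsum (pterms a1 z1 c1) (fun _ => 0%nat) n e) in *.
    assert (Cmod (Sb - l e) <= Cmod (Sa - l1 e) + Cmod (Sb - Sa) + Cmod (l e - l1 e)).
    { replace (Sb - l e)%C with ((Sa - l1 e) + (Sb - Sa) + - (l e - l1 e))%C by ring.
      eapply Rle_trans; [apply Cmod_triangle|]. rewrite Cmod_opp.
      pose proof (Cmod_triangle (Sa - l1 e) (Sb - Sa)). lra. }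
    assert (rho e ^ (mm + 2) <= rho e ^ mm / 16).
    { rewrite pow_add. simpl. assert (0 < rho e ^ mm) by (apply rho_pow_pos; auto). assert (rho e * (rho e * 1) <= /16) by nra. nra. }
    pose proof (rho_pow_pos rho q e A4). pose proof (rho_pow_pos rho mm e A4).
    assert (rho e * rho e ^ q <= rho e ^ q) by nra. assert (rho e * rho e ^ mm <= rho e ^ mm / 4) by nra.
    lra.
Qed.

Lemma target_all : (condA rho b y d /\ condB rho b y d /\ condC rho b y d) /\
  forall K, hypnat rho K ->
  negligibleC rho (fun e => hsum (pterms b y d) (fun _ => 0%nat) K e - hsum (pterms a1 z1 c1) (fun _ => 0%nat) K e)%C.
Proof. split; [split; [apply tA|split; [apply tB|apply tC]]|apply coreD]. Qed.

End Main.

Lemma Cplus_minus_help (A B : C) : B = (A + B - A)%C.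
Proof. ring. Qed.

Lemma snm_split (f : nat -> C) n m : Cmod (sum_n_m f n m) <= Cmod (SS f m) + Cmod (SS f (n - 1)).
Proof.
  destruct n as [|n'].
  - change (sum_n_m f 0 m) with (SS f m). pose proof (Cmod_ge_0 (SS f (0 - 1))). lra.
  - replace (S n' - 1)%nat with n' by lia. destruct (Compare_dec.le_lt_dec (S n') m) as [Hle|Hlt].
    + pose proof (sum_n_m_Chasles f 0 n' m ltac:(lia) ltac:(lia)) as Hc.
      assert (E : @eq C (sum_n_m f (S n') m) (SS f m - SS f n')%C).
      { assert (Hc' : SS f m = (SS f n' + (sum_n_m f (S n') m : C))%C) by exact Hc.
        rewrite Hc'. apply Cplus_minus_help. }
      rewrite E. replace (SS f m - SS f n')%C with (SS f m + - SS f n')%C by ring.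
      eapply Rle_trans; [apply Cmod_triangle|]. rewrite Cmod_opp. lra.
    + rewrite sum_n_m_zero by lia. change (Cmod (RtoC 0) <= Cmod (SS f m) + Cmod (SS f n')).
      rewrite Cmod_0. pose proof (Cmod_ge_0 (SS f m)). pose proof (Cmod_ge_0 (SS f n')). lra.
Qed.



Theorem theorem2p27 (rho : R -> R) (a ah : nat -> R -> C) (z zh c ch : R -> C) :
  is_gauge rho ->
  weakly_moderate rho a -> weakly_moderate rho ah -> strong_eq rho a ah ->
  moderateC rho z -> moderateC rho zh -> eqC rho z zh ->
  moderateC rho c -> moderateC rho ch -> eqC rho c ch ->
  in_S rho a z c ->
  ((condA rho a z c /\ condB rho a z c /\ condC rho a z c) /\
   (condA rho ah zh ch /\ condB rho ah zh ch /\ condC rho ah zh ch)) /\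
  eq_s rho (pterms a z c) (pterms ah zh ch).
Proof.
  intros Hg Hwm Hwmh Hsh Hmz Hmzh Hzh Hmc Hmch Hch [[a2 [z2 [c2 [Hs2 [Hz2 [Hc2 Hrad]]]]]] [a1 [z1 [c1 [Hs1 [Hz1 [Hc1 [HA1 [HB1 HC1]]]]]]]]].
  assert (Hrefl : forall x : R -> C, eqC rho x x).
  { intros x. apply negC_iff. intros q. apply ev0_mono with (1 := ev0_rho rho Hg). intros e _ H.
    replace (x e - x e)%C with (RtoC 0) by ring. rewrite Cmod_0. left; apply rho_pow_pos; auto. }
  destruct (target_all rho a a1 a2 a z c z1 c1 z2 c2 z c Hg Hwm Hmz Hmc Hs1 Hs2 (strong_refl rho Hg a) Hz1 Hc1 Hz2 Hc2
     (Hrefl z) (Hrefl c) Hrad HA1 HB1 HC1) as [T1 D1].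
  destruct (target_all rho a a1 a2 ah z c z1 c1 z2 c2 zh ch Hg Hwm Hmz Hmc Hs1 Hs2 Hsh Hz1 Hc1 Hz2 Hc2
     Hzh Hch Hrad HA1 HB1 HC1) as [T2 D2].
  split; [split; auto|].
  intros N M HN HM.
  assert (HN1 : hypnat rho (fun e => (N e - 1)%nat)).
  { apply (modR_iff rho Hg) in HN. apply (modR_iff rho Hg). destruct HN as [K HK]. exists K.
    apply ev0_mono with (1 := ev0_and _ _ HK (ev0_rho rho Hg)). intros e _ [A1 A2].
    rewrite Rabs_pos_eq in * by apply pos_INR. eapply Rle_trans; [|exact A1].
    apply Rmult_le_compat_r; [left; apply rho_pow_pos; auto|]. apply le_INR; lia. }
  set (X := fun K : R -> nat => fun e => (hsum (pterms a z c) (fun _ => 0%nat) K e - hsum (pterms ah zh ch) (fun _ => 0%nat) K e)%C).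
  assert (HX : forall K, hypnat rho K -> negligibleC rho (X K)).
  { intros K HK. apply (negl_ext rho) with (fun e => (hsum (pterms a z c) (fun _ => 0%nat) K e - hsum (pterms a1 z1 c1) (fun _ => 0%nat) K e)
        - (hsum (pterms ah zh ch) (fun _ => 0%nat) K e - hsum (pterms a1 z1 c1) (fun _ => 0%nat) K e))%C.
    { intros e. unfold X. ring. }
    apply (negl_minus rho Hg); auto. }
  apply (negl_le2 rho Hg) with (X M) (X (fun e => (N e - 1)%nat)); auto.
  apply ev0_true. intros e _. unfold hsum.
  pose proof (snm_split (fun n => pterms a z c n e - pterms ah zh ch n e)%C (N e) (M e)) as Hs.
  unfold X. change (hsum (pterms a z c) (fun _ => 0%nat) M e) with (SS (fun n => pterms a z c n e) (M e)).
  change (hsum (pterms ah zh ch) (fun _ => 0%nat) M e) with (SS (fun n => pterms ah zh ch n e) (M e)).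
  change (hsum (pterms a z c) (fun _ => 0%nat) (fun e => (N e - 1)%nat) e) with (SS (fun n => pterms a z c n e) (N e - 1)).
  change (hsum (pterms ah zh ch) (fun _ => 0%nat) (fun e => (N e - 1)%nat) e) with (SS (fun n => pterms ah zh ch n e) (N e - 1)).
  rewrite <- !SS_minus. exact Hs.
Qed.
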